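(* Let $E$ be a separable Banach sequence lattice containing all unit vectors $e_k$, on which the shifts $\tau_n$, $n\in\mathbb Z$, are bounded, and assume that with $s_k:=\|e_k\|_E$, $$k_+(E)=\lim_{n\to\infty}\Big(\sup_{k>n}\frac{s_k}{s_{k-n}}\Big)^{1/n},\qquad k_-(E)=\lim_{n\to\infty}\Big(\sup_{k\in\mathbb N}\frac{s_k}{s_{n+k}}\Big)^{1/n}.$$ For $\lambda>0$ let $T_\lambda=\tau_1-\lambda I$ on $E$. Then the following are equivalent: (i) $T_\lambda$ is an isomorphic embedding of $E$ into itself (there is $c>0$ with $\|T_\lambda x\|_E\ge c\|x\|_E$ for all $x$); (ii) $T_\lambda$ has closed range; (iii) $\lambda\in(0,1/k_-(E))\cup(k_+(E),\infty)$. Moreover, if $\lambda>k_+(E)$ then $T_\lambda(E)=E$, and if $0<\lambda<1/k_-(E)$ then $T_\lambda(E)$ is the closed subspace of codimension $1$ in $E$ consisting of all $(a_k)\in E$ with $\sum_{k=1}^\infty\lambda^ka_k=0$ (this series converging for every $(a_k)\in E$).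
   Context: A Banach sequence lattice is a Banach space $E$ of real sequences such that $x\in E$, $|y_k|\le|x_k|$ imply $y\in E$, $\|y\|_E\le\|x\|_E$. For $n\in\mathbb Z$, $\tau_nx=(x_{k-n})_{k\ge1}$ with $x_j:=0$ for $j\notin\mathbb N$. For a Banach sequence lattice on which all $\tau_n$ are bounded, $k_+(E)=\lim_{n\to\infty}\|\tau_n\|_E^{1/n}$ and $k_-(E)=\lim_{n\to\infty}\|\tau_{-n}\|_E^{1/n}$; the hypothesis says these exponents are computed by the displayed formulas involving only the norms of unit vectors. *)

(* Defs.v *)
From Stdlib Require Import Reals Lra Lia ZArith Arith.
From Coquelicot Require Import Coquelicot.
Open Scope R_scope.

(* Real sequences are indexed by nat; index i here is index i+1 of the paper. *)
Definition seqR := nat -> R.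

Definition sadd (x y : seqR) : seqR := fun k => x k + y k.
Definition sscal (a : R) (x : seqR) : seqR := fun k => a * x k.
Definition ssub (x y : seqR) : seqR := fun k => x k - y k.
Definition szero : seqR := fun _ => 0.

(* unit vector e_{k+1} of the paper *)
Definition unitv (k : nat) : seqR := fun i => if Nat.eqb i k then 1 else 0.

Record BanachSeqLattice (E : seqR -> Prop) (N : seqR -> R) : Prop := {
  bsl_zero : E szero;
  bsl_add : forall x y, E x -> E y -> E (sadd x y);
  bsl_scal : forall a x, E x -> E (sscal a x);
  bsl_norm_nonneg : forall x, E x -> 0 <= N x;
  bsl_norm_def : forall x, E x -> N x = 0 -> x = szero;
  bsl_norm_scal : forall a x, E x -> N (sscal a x) = Rabs a * N x;
  bsl_norm_tri : forall x y, E x -> E y -> N (sadd x y) <= N x + N y;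
  bsl_solid : forall x y, E x -> (forall k, Rabs (y k) <= Rabs (x k)) ->
                E y /\ N y <= N x;
  bsl_complete : forall u : nat -> seqR, (forall n, E (u n)) ->
     (forall eps, 0 < eps -> exists M, forall m n, (M <= m)%nat -> (M <= n)%nat ->
         N (ssub (u m) (u n)) < eps) ->
     exists x, E x /\ forall eps, 0 < eps -> exists M, forall n, (M <= n)%nat ->
         N (ssub (u n) x) < eps }.

Definition separable (E : seqR -> Prop) (N : seqR -> R) : Prop :=
  exists d : nat -> seqR, (forall n, E (d n)) /\
    forall x, E x -> forall eps, 0 < eps -> exists n, N (ssub x (d n)) < eps.

(* shift tau_n, n : Z: (tau_n x)_k = x_{k-n}, with x_j = 0 outside the index set *)
Definition tau (n : Z) (x : seqR) : seqR := fun k =>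
  if Z.leb 0 n then
    (if Nat.leb (Z.to_nat n) k then x (k - Z.to_nat n)%nat else 0)
  else x (k + Z.to_nat (- n))%nat.

Definition shifts_bounded (E : seqR -> Prop) (N : seqR -> R) : Prop :=
  forall n : Z, (forall x, E x -> E (tau n x)) /\
     exists C, forall x, E x -> N (tau n x) <= C * N x.

Definition opnorm (E : seqR -> Prop) (N : seqR -> R) (T : seqR -> seqR) : R :=
  real (Glb_Rbar (fun C => 0 <= C /\ forall x, E x -> N (T x) <= C * N x)).

(* k_+(E) = lim ||tau_n||^{1/n}, k_-(E) = lim ||tau_{-n}||^{1/n}
   (sequences reindexed by n+1 to avoid n = 0) *)
Definition kplus (E : seqR -> Prop) (N : seqR -> R) : R :=
  real (Lim_seq (fun n => Rpower (opnorm E N (tau (Z.of_nat (S n)))) (/ INR (S n)))).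
Definition kminus (E : seqR -> Prop) (N : seqR -> R) : R :=
  real (Lim_seq (fun n => Rpower (opnorm E N (tau (- Z.of_nat (S n)))) (/ INR (S n)))).

(* sup_{k>n} s_k / s_{k-n}, in 0-based indices: sup_j s_{j+n} / s_j *)
Definition supplus (N : seqR -> R) (n : nat) : R :=
  real (Sup_seq (fun j => Finite (N (unitv (j + n)) / N (unitv j)))).
Definition supminus (N : seqR -> R) (n : nat) : R :=
  real (Sup_seq (fun j => Finite (N (unitv j) / N (unitv (n + j))))).

Definition Tlam (lam : R) (x : seqR) : seqR := fun k => tau 1 x k - lam * x k.

Definition iso_embedding (E : seqR -> Prop) (N : seqR -> R) (T : seqR -> seqR) : Prop :=
  exists c, 0 < c /\ forall x, E x -> c * N x <= N (T x).

Definition closed_range (E : seqR -> Prop) (N : seqR -> R) (T : seqR -> seqR) : Prop :=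
  forall y, E y ->
    (forall eps, 0 < eps -> exists x, E x /\ N (ssub y (T x)) < eps) ->
    exists x, E x /\ y = T x.

(* the functional a |-> sum_{k>=1} lambda^k a_k (0-based: lambda^(k+1) a k) *)
Definition lamterm (lam : R) (a : seqR) : nat -> R := fun k => lam ^ (S k) * a k.

(* Main.v *)
Require Import Defs.
From Stdlib Require Import Reals ZArith Lra Lia FunctionalExtensionality Classical ClassicalEpsilon.
From Coquelicot Require Import Coquelicot.
Open Scope R_scope.

Section Basics.
Variables (E : seqR -> Prop) (N : seqR -> R).
Hypothesis HB : BanachSeqLattice E N.
Hypothesis HU : forall k, E (unitv k).

Lemma E_sub x y : E x -> E y -> E (ssub x y).
Proof.
  intros Hx Hy. replace (ssub x y) with (sadd x (sscal (-1) y)).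
  - apply (bsl_add _ _ HB); auto. apply (bsl_scal _ _ HB); auto.
  - apply functional_extensionality; intro k; unfold sadd, sscal, ssub; ring.
Qed.

Lemma E_sadd x y : E x -> E y -> E (sadd x y).
Proof. apply (bsl_add _ _ HB). Qed.
Lemma E_sscal a x : E x -> E (sscal a x).
Proof. apply (bsl_scal _ _ HB). Qed.

Lemma N_nonneg x : E x -> 0 <= N x.
Proof. apply (bsl_norm_nonneg _ _ HB). Qed.

Lemma N_scal a x : E x -> N (sscal a x) = Rabs a * N x.
Proof. apply (bsl_norm_scal _ _ HB). Qed.

Lemma N_solid x y : E x -> (forall k, Rabs (y k) <= Rabs (x k)) -> E y /\ N y <= N x.
Proof. apply (bsl_solid _ _ HB). Qed.

Lemma N_ext x y : E x -> (forall k, y k = x k) -> N y = N x.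
Proof.
  intros Hx H. replace y with x; auto. apply functional_extensionality; intro; rewrite H; auto.
Qed.

Lemma N_sym x y : E x -> E y -> N (ssub x y) = N (ssub y x).
Proof.
  intros Hx Hy. replace (ssub x y) with (sscal (-1) (ssub y x)).
  - rewrite N_scal by (apply E_sub; auto). rewrite Rabs_left by lra; ring.
  - apply functional_extensionality; intro k; unfold sscal, ssub; ring.
Qed.

Lemma N_tri x y : E x -> E y -> N (sadd x y) <= N x + N y.
Proof. apply (bsl_norm_tri _ _ HB). Qed.

Lemma N_tri_sub x y z : E x -> E y -> E z -> N (ssub x z) <= N (ssub x y) + N (ssub y z).
Proof.
  intros Hx Hy Hz. replace (ssub x z) with (sadd (ssub x y) (ssub y z)).
  - apply N_tri; apply E_sub; auto.
  - apply functional_extensionality; intro k; unfold sadd, ssub; ring.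
Qed.

Lemma N_zero_eq x y : E x -> E y -> N (ssub x y) = 0 -> x = y.
Proof.
  intros Hx Hy H. apply (bsl_norm_def _ _ HB) in H; [|apply E_sub; auto].
  apply functional_extensionality; intro k.
  assert (ssub x y k = szero k) by (rewrite H; auto). unfold ssub, szero in H0; lra.
Qed.

Lemma N_small_eq x y : E x -> E y -> (forall eps, 0 < eps -> N (ssub x y) < eps) -> x = y.
Proof.
  intros Hx Hy H. apply N_zero_eq; auto.
  pose proof (N_nonneg _ (E_sub _ _ Hx Hy)).
  destruct (Rle_lt_or_eq_dec _ _ H0); auto.
  specialize (H _ r); lra.
Qed.

Lemma unitv_pos k : 0 < N (unitv k).
Proof.
  destruct (Rle_lt_or_eq_dec _ _ (N_nonneg _ (HU k))); auto.
  symmetry in e. apply (bsl_norm_def _ _ HB) in e; auto.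
  assert (unitv k k = szero k) by (rewrite e; auto).
  unfold unitv, szero in H. rewrite Nat.eqb_refl in H. lra.
Qed.

Lemma coord_bound x k : E x -> Rabs (x k) * N (unitv k) <= N x.
Proof.
  intros Hx. rewrite <- N_scal by auto.
  apply (N_solid x); auto.
  intro i. unfold sscal, unitv. destruct (Nat.eqb_spec i k).
  - subst; rewrite Rmult_1_r; lra.
  - rewrite Rmult_0_r, Rabs_R0. apply Rabs_pos.
Qed.

Lemma coord_bound' x k : E x -> Rabs (x k) <= N x / N (unitv k).
Proof.
  intros Hx. pose proof (coord_bound x k Hx). pose proof (unitv_pos k).
  apply Rmult_le_reg_r with (N (unitv k)); auto. field_simplify; lra.
Qed.

Lemma E_finsupp b : forall x, (forall i, (b <= i)%nat -> x i = 0) -> E x.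
Proof.
  induction b; intros x Hx.
  - replace x with szero. apply (bsl_zero _ _ HB).
    apply functional_extensionality; intro i. rewrite Hx by lia. reflexivity.
  - replace x with (sadd (fun i => if Nat.ltb i b then x i else 0) (sscal (x b) (unitv b))).
    + apply E_sadd. apply IHb. intros i Hi. destruct (Nat.ltb_spec i b); auto; lia.
      apply E_sscal; auto.
    + apply functional_extensionality; intro i. unfold sadd, sscal, unitv.
      destruct (Nat.ltb_spec i b); destruct (Nat.eqb_spec i b); subst; try lia; try ring.
      rewrite (Hx i) by lia. ring.
Qed.

Definition nconv (u : nat -> seqR) (x : seqR) : Prop :=
  forall eps, 0 < eps -> exists M, forall n, (M <= n)%nat -> N (ssub (u n) x) < eps.

Lemma nconv_coord u x k : (forall n, E (u n)) -> E x -> nconv u x ->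
  is_lim_seq (fun n => u n k) (x k).
Proof.
  intros Hu Hx Hc. apply is_lim_seq_spec. intro eps.
  pose proof (unitv_pos k).
  destruct (Hc (eps * N (unitv k))) as [M HM]. { apply Rmult_lt_0_compat; auto. apply cond_pos. }
  exists M; intros n Hn. specialize (HM n Hn).
  pose proof (coord_bound _ k (E_sub _ _ (Hu n) Hx)). change (ssub (u n) x k) with (u n k - x k) in H0.
  apply Rmult_lt_reg_r with (N (unitv k)); auto. lra.
Qed.

Lemma complete u : (forall n, E (u n)) ->
  (forall eps, 0 < eps -> exists M, forall m n, (M <= m)%nat -> (M <= n)%nat -> N (ssub (u m) (u n)) < eps) ->
  exists x, E x /\ nconv u x.
Proof. apply (bsl_complete _ _ HB). Qed.

Lemma geom_small (q eps : R) : 0 <= q < 1 -> 0 < eps -> exists M, forall n, (M <= n)%nat -> q ^ n < eps.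
Proof.
  intros Hq He. pose proof (is_lim_seq_geom q) as H.
  assert (Rabs q < 1) by (rewrite Rabs_pos_eq; lra).
  specialize (H H0). apply is_lim_seq_spec in H. destruct (H (mkposreal eps He)) as [M HM].
  exists M; intros n Hn. specialize (HM n Hn). simpl in HM.
  rewrite Rminus_0_r in HM. eapply Rle_lt_trans; [apply Rle_abs|]; auto.
Qed.

Lemma complete_geom u (C q : R) : (forall n, E (u n)) -> 0 <= q < 1 ->
  (forall n, N (ssub (u (S n)) (u n)) <= C * q ^ n) ->
  exists x, E x /\ nconv u x.
Proof.
  intros Hu Hq Hs. apply complete; auto.
  assert (HC : 0 <= C).
  { specialize (Hs O). rewrite pow_O in Hs. pose proof (N_nonneg _ (E_sub _ _ (Hu 1%nat) (Hu O))). lra. }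
  assert (Hd : forall m k, N (ssub (u (k + m)%nat) (u m)) <= C * q ^ m * (1 - q ^ k) / (1 - q)).
  { intros m k. induction k.
    - simpl. replace (ssub (u m) (u m)) with (sscal 0 (u m)).
      + rewrite N_scal by auto. rewrite Rabs_R0, Rmult_0_l. right; field; lra.
      + apply functional_extensionality; intro; unfold ssub, sscal; ring.
    - eapply Rle_trans. apply (N_tri_sub _ (u (k + m)%nat)); auto.
      specialize (Hs (k + m)%nat). simpl (S k + m)%nat.
      rewrite pow_add in Hs.
      apply Rle_trans with (C * (q ^ k * q ^ m) + C * q ^ m * (1 - q ^ k) / (1 - q)); [lra|].
      right. simpl. field. lra. }
  assert (Hd' : forall m k, N (ssub (u (k + m)%nat) (u m)) <= C * q ^ m / (1 - q)).
  { intros m k. eapply Rle_trans; [apply Hd|]. unfold Rdiv. apply Rmult_le_compat_r.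
    apply Rlt_le, Rinv_0_lt_compat; lra. rewrite <- (Rmult_1_r (C * q ^ m)) at 2.
    apply Rmult_le_compat_l. apply Rmult_le_pos; auto; apply pow_le; lra.
    pose proof (pow_le q k (proj1 Hq)); lra. }
  intros eps He.
  destruct (geom_small q (eps * (1 - q) / (2 * (C + 1))) Hq) as [M HM].
  { apply Rmult_lt_0_compat. apply Rmult_lt_0_compat; lra. apply Rinv_0_lt_compat; lra. }
  exists M; intros m n Hm Hn.
  eapply Rle_lt_trans. apply (N_tri_sub _ (u M)); auto.
  rewrite (N_sym (u M)) by auto.
  replace m with ((m - M) + M)%nat by lia. replace n with ((n - M) + M)%nat by lia.
  eapply Rle_lt_trans. apply Rplus_le_compat; apply Hd'.
  specialize (HM M (le_n _)).
  assert (C * q ^ M < (C + 1) * (eps * (1 - q) / (2 * (C + 1)))).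
  { apply Rle_lt_trans with ((C+1) * q ^ M). apply Rmult_le_compat_r. apply pow_le; lra. lra.
    apply Rmult_lt_compat_l; lra. }
  replace ((C + 1) * (eps * (1 - q) / (2 * (C + 1)))) with (eps * (1-q) / 2) in H by (field; lra).
  apply Rmult_lt_compat_r with (r := / (1 - q)) in H. 2: apply Rinv_0_lt_compat; lra.
  replace (eps * (1 - q) / 2 * / (1 - q)) with (eps / 2) in H by (field; lra).
  unfold Rdiv. lra.
Qed.

End Basics.

Lemma tau_pos_eq n x k : tau (Z.of_nat n) x k = if Nat.leb n k then x (k - n)%nat else 0.
Proof.
  unfold tau. assert (Z.leb 0 (Z.of_nat n) = true) by (apply Z.leb_le; lia).
  rewrite H, Nat2Z.id. reflexivity.
Qed.

Lemma tau_neg_eq n x k : tau (- Z.of_nat n) x k = x (k + n)%nat.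
Proof.
  unfold tau. destruct n.
  - simpl. rewrite Nat.sub_0_r, Nat.add_0_r. reflexivity.
  - assert (Z.leb 0 (- Z.of_nat (S n)) = false) by (apply Z.leb_gt; lia).
    rewrite H. rewrite Z.opp_involutive, Nat2Z.id. reflexivity.
Qed.

Lemma tau1_eq x k : tau 1 x k = match k with O => 0 | S k' => x k' end.
Proof.
  change 1%Z with (Z.of_nat 1). rewrite tau_pos_eq. destruct k; simpl; auto.
  rewrite Nat.sub_0_r; auto.
Qed.

Lemma Tlam_eq lam x k : Tlam lam x k = match k with O => 0 | S k' => x k' end - lam * x k.
Proof. unfold Tlam. rewrite tau1_eq. reflexivity. Qed.

Lemma Tlam_add lam x y : Tlam lam (sadd x y) = sadd (Tlam lam x) (Tlam lam y).
Proof. apply functional_extensionality; intro k. unfold sadd. rewrite !Tlam_eq. destruct k; unfold sadd; ring. Qed.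
Lemma Tlam_scal lam a x : Tlam lam (sscal a x) = sscal a (Tlam lam x).
Proof. apply functional_extensionality; intro k. unfold sscal. rewrite !Tlam_eq. destruct k; unfold sscal; ring. Qed.
Lemma Tlam_sub lam x y : Tlam lam (ssub x y) = ssub (Tlam lam x) (Tlam lam y).
Proof. apply functional_extensionality; intro k. unfold ssub. rewrite !Tlam_eq. destruct k; unfold ssub; ring. Qed.

Lemma Tlam_tau lam P x : Tlam lam (tau (Z.of_nat P) x) = tau (Z.of_nat P) (Tlam lam x).
Proof.
  apply functional_extensionality; intro k. rewrite Tlam_eq, !tau_pos_eq.
  destruct k as [|k].
  - destruct (Nat.leb_spec P 0).
    + replace (0 - P)%nat with 0%nat by lia. rewrite Tlam_eq. ring.
    + ring.
  - rewrite tau_pos_eq. destruct (Nat.leb_spec P (S k)); destruct (Nat.leb_spec P k).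
    + replace (S k - P)%nat with (S (k - P)) by lia. rewrite Tlam_eq. reflexivity.
    + assert (P = S k) by lia. subst. rewrite Nat.sub_diag, Tlam_eq. ring.
    + lia.
    + ring.
Qed.

Lemma tau_neg_pos P x : tau (- Z.of_nat P) (tau (Z.of_nat P) x) = x.
Proof.
  apply functional_extensionality; intro k. rewrite tau_neg_eq, tau_pos_eq.
  destruct (Nat.leb_spec P (k + P)); try lia. f_equal; lia.
Qed.

Lemma tau_pos_unitv n j : tau (Z.of_nat n) (unitv j) = unitv (j + n).
Proof.
  apply functional_extensionality; intro k. rewrite tau_pos_eq. unfold unitv.
  destruct (Nat.leb_spec n k); destruct (Nat.eqb_spec (k - n) j); destruct (Nat.eqb_spec k (j + n)); auto; lia.
Qed.

Lemma tau_neg_unitv n j : tau (- Z.of_nat n) (unitv (j + n)) = unitv j.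
Proof.
  apply functional_extensionality; intro k. rewrite tau_neg_eq. unfold unitv.
  destruct (Nat.eqb_spec (k + n) (j + n)); destruct (Nat.eqb_spec k j); auto; lia.
Qed.

Lemma tau_pos_S n x : tau (Z.of_nat (S n)) x = tau 1 (tau (Z.of_nat n) x).
Proof.
  apply functional_extensionality; intro k. rewrite tau1_eq, !tau_pos_eq.
  destruct k; simpl; auto. rewrite tau_pos_eq. destruct (Nat.leb n k); auto.
Qed.

Lemma tau_neg_S n x : tau (- Z.of_nat (S n)) x = tau (-1) (tau (- Z.of_nat n) x).
Proof.
  apply functional_extensionality; intro k. change (-1)%Z with (- Z.of_nat 1)%Z.
  rewrite !tau_neg_eq. f_equal. lia.
Qed.

Section Ops.
Variables (E : seqR -> Prop) (N : seqR -> R).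
Hypothesis HB : BanachSeqLattice E N.
Hypothesis HU : forall k, E (unitv k).
Hypothesis HS : shifts_bounded E N.

Lemma opnorm_spec T : (forall x, E x -> E (T x)) -> (exists C, forall x, E x -> N (T x) <= C * N x) ->
  0 <= opnorm E N T /\ (forall x, E x -> N (T x) <= opnorm E N T * N x) /\
  (forall C, 0 <= C -> (forall x, E x -> N (T x) <= C * N x) -> opnorm E N T <= C).
Proof.
  intros HT [C HC].
  set (S := fun C => 0 <= C /\ forall x, E x -> N (T x) <= C * N x).
  assert (HC' : S (Rmax C 0)).
  { split. apply Rmax_r. intros x Hx. eapply Rle_trans; [apply HC; auto|].
    apply Rmult_le_compat_r. apply (N_nonneg E N HB); auto. apply Rmax_l. }
  destruct (Glb_Rbar_correct S) as [Hlb Hgr].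
  assert (H0 : Rbar_le 0 (Glb_Rbar S)). { apply Hgr. intros c [Hc _]. simpl; auto. }
  assert (H1 : Rbar_le (Glb_Rbar S) (Rmax C 0)) by (apply Hlb; auto).
  unfold opnorm. fold S.
  destruct (Glb_Rbar S) as [g| |] eqn:Hg; simpl in H0, H1; try contradiction.
  simpl. split; [auto|split].
  - intros x Hx. apply Rnot_lt_le; intro Hlt.
    pose proof (N_nonneg _ _ HB x Hx) as Hn.
    destruct (Rle_lt_or_eq_dec _ _ Hn) as [Hp|Hz].
    + assert (Hl : is_lb_Rbar S (N (T x) / N x)).
      { intros c [Hc Hc']. simpl. specialize (Hc' x Hx).
        apply Rmult_le_reg_r with (N x); auto. field_simplify; lra. }
      apply Hgr in Hl. simpl in Hl.
      apply (Rmult_le_compat_r (N x)) in Hl; [|lra]. field_simplify in Hl; lra.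
    + assert (N (T x) <= 0). { specialize (HC x Hx). rewrite <- Hz in HC. lra. }
      rewrite <- Hz in Hlt. lra.
  - intros c Hc Hc'. assert (S c) by (split; auto). apply Hlb in H. auto.
Qed.

Definition Aop (n : nat) := opnorm E N (tau (Z.of_nat n)).
Definition Bop (n : nat) := opnorm E N (tau (- Z.of_nat n)).

Lemma tau_E z x : E x -> E (tau z x).
Proof. intros. apply (proj1 (HS z)); auto. Qed.

Lemma A_spec n : 0 <= Aop n /\ (forall x, E x -> N (tau (Z.of_nat n) x) <= Aop n * N x) /\
  (forall C, 0 <= C -> (forall x, E x -> N (tau (Z.of_nat n) x) <= C * N x) -> Aop n <= C).
Proof. apply opnorm_spec. apply tau_E. apply (proj2 (HS _)). Qed.
Lemma B_spec n : 0 <= Bop n /\ (forall x, E x -> N (tau (- Z.of_nat n) x) <= Bop n * N x) /\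
  (forall C, 0 <= C -> (forall x, E x -> N (tau (- Z.of_nat n) x) <= C * N x) -> Bop n <= C).
Proof. apply opnorm_spec. apply tau_E. apply (proj2 (HS _)). Qed.

Lemma A_bound n x : E x -> N (tau (Z.of_nat n) x) <= Aop n * N x.
Proof. apply (A_spec n). Qed.
Lemma B_bound n x : E x -> N (tau (- Z.of_nat n) x) <= Bop n * N x.
Proof. apply (B_spec n). Qed.

Lemma A_unit n j : N (unitv (j + n)) <= Aop n * N (unitv j).
Proof. rewrite <- tau_pos_unitv. apply A_bound; auto. Qed.
Lemma B_unit n j : N (unitv j) <= Bop n * N (unitv (j + n)).
Proof. rewrite <- (tau_neg_unitv n j) at 1. apply B_bound; auto. Qed.

Lemma A_pos n : 0 < Aop n.
Proof.
  pose proof (A_unit n 0). pose proof (unitv_pos _ _ HB HU (0 + n)). pose proof (unitv_pos _ _ HB HU 0).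
  pose proof (proj1 (A_spec n)). destruct (Rle_lt_or_eq_dec _ _ H2); auto. rewrite <- e in H. lra.
Qed.
Lemma B_pos n : 0 < Bop n.
Proof.
  pose proof (B_unit n 0). pose proof (unitv_pos _ _ HB HU (0 + n)). pose proof (unitv_pos _ _ HB HU 0).
  pose proof (proj1 (B_spec n)). destruct (Rle_lt_or_eq_dec _ _ H2); auto. rewrite <- e in H. lra.
Qed.

Lemma A_pow_bound n x : E x -> N (tau (Z.of_nat n) x) <= Aop 1 ^ n * N x.
Proof.
  revert x; induction n; intros x Hx.
  - replace (tau (Z.of_nat 0) x) with x. simpl; lra.
    apply functional_extensionality; intro k. rewrite tau_pos_eq. simpl. rewrite Nat.sub_0_r; auto.
  - rewrite tau_pos_S. eapply Rle_trans. apply (A_bound 1). apply tau_E; auto.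
    simpl. rewrite Rmult_assoc. apply Rmult_le_compat_l. apply A_spec. apply IHn; auto.
Qed.
Lemma B_pow_bound n x : E x -> N (tau (- Z.of_nat n) x) <= Bop 1 ^ n * N x.
Proof.
  revert x; induction n; intros x Hx.
  - replace (tau (- Z.of_nat 0) x) with x. simpl; lra.
    apply functional_extensionality; intro k. rewrite tau_neg_eq. rewrite Nat.add_0_r; auto.
  - rewrite tau_neg_S. eapply Rle_trans. apply (B_bound 1). apply tau_E; auto.
    simpl. rewrite Rmult_assoc. apply Rmult_le_compat_l. apply B_spec. apply IHn; auto.
Qed.

Lemma A_le_pow n : Aop n <= Aop 1 ^ n.
Proof. apply A_spec. apply pow_le, A_spec. apply A_pow_bound. Qed.
Lemma B_le_pow n : Bop n <= Bop 1 ^ n.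
Proof. apply B_spec. apply pow_le, B_spec. apply B_pow_bound. Qed.

Lemma T_E lam x : E x -> E (Tlam lam x).
Proof.
  intros Hx. replace (Tlam lam x) with (sadd (tau 1 x) (sscal (- lam) x)).
  apply (E_sadd E N HB); auto. apply tau_E; auto. apply (E_sscal E N HB); auto.
  apply functional_extensionality; intro k; unfold Tlam, sadd, sscal; ring.
Qed.

Lemma T_bound lam x : E x -> N (Tlam lam x) <= (Aop 1 + Rabs lam) * N x.
Proof.
  intros Hx. replace (Tlam lam x) with (sadd (tau 1 x) (sscal (- lam) x)).
  eapply Rle_trans. apply (N_tri E N HB); auto. apply tau_E; auto. apply (E_sscal E N HB); auto.
  rewrite (N_scal E N HB), Rabs_Ropp; auto. pose proof (A_bound 1 x Hx). simpl in H. lra.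
  apply functional_extensionality; intro k; unfold Tlam, sadd, sscal; ring.
Qed.

End Ops.

Lemma pow_lt_strict x y n : 0 <= x < y -> (1 <= n)%nat -> x ^ n < y ^ n.
Proof.
  intros Hxy Hn. induction n; [lia|]. destruct n.
  - simpl; lra.
  - assert (x ^ S n < y ^ S n) by (apply IHn; lia).
    change (x * x ^ S n < y * y ^ S n).
    pose proof (pow_le x (S n) (proj1 Hxy)).
    apply Rle_lt_trans with (x * y ^ S n). apply Rmult_le_compat_l; lra.
    apply Rmult_lt_compat_r; [|lra]. lra.
Qed.

Lemma Rpower_pos a b : 0 < Rpower a b.
Proof. unfold Rpower. apply exp_pos. Qed.

Lemma Rpower_root_pow a m : 0 < a -> (1 <= m)%nat -> (Rpower a (/ INR m)) ^ m = a.
Proof.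
  intros Ha Hm. rewrite <- Rpower_pow by apply Rpower_pos.
  rewrite Rpower_mult. rewrite Rinv_l. apply Rpower_1; auto.
  apply not_0_INR; lia.
Qed.

Lemma Rpower_pow_root a m : 0 < a -> (1 <= m)%nat -> Rpower (a ^ m) (/ INR m) = a.
Proof.
  intros Ha Hm. rewrite <- Rpower_pow by auto.
  rewrite Rpower_mult. rewrite Rinv_r. apply Rpower_1; auto.
  apply not_0_INR; lia.
Qed.

Lemma root_lt_pow a r m : 0 < a -> 0 < r -> (1 <= m)%nat -> Rpower a (/ INR m) < r -> a < r ^ m.
Proof.
  intros Ha Hr Hm H. rewrite <- (Rpower_root_pow a m) by auto.
  apply pow_lt_strict; auto. split; auto. apply Rlt_le, Rpower_pos.
Qed.

Lemma root_gt_pow a r m : 0 < a -> 0 < r -> (1 <= m)%nat -> r < Rpower a (/ INR m) -> r ^ m < a.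
Proof.
  intros Ha Hr Hm H. rewrite <- (Rpower_root_pow a m) by auto.
  apply pow_lt_strict; auto. split; auto. lra.
Qed.

Lemma lim_from_below (a b : nat -> R) (K l : R) :
  (forall n, 0 < b n <= a n) -> (forall n, a n <= K) -> is_lim_seq b l ->
  l = real (Lim_seq a) -> is_lim_seq a l.
Proof.
  intros Hba HK Hb Hl.
  pose proof (proj2_sig (ex_LimSup_seq a)) as HS. pose proof (proj2_sig (ex_LimInf_seq a)) as HI.
  change (is_LimSup_seq a (LimSup_seq a)) in HS. change (is_LimInf_seq a (LimInf_seq a)) in HI.
  unfold Lim_seq in Hl.
  destruct (LimSup_seq a) as [s| |] eqn:Es.
  2: { destruct (HS K O) as [n [_ Hn]]. specialize (HK n); lra. }
  2: { destruct (HS 0) as [M HM]. specialize (HM M (le_n _)). specialize (Hba M); lra. }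
  destruct (LimInf_seq a) as [i| |] eqn:Ei.
  2: { destruct (HI K) as [M HM]. specialize (HM M (le_n _)). specialize (HK M); lra. }
  2: { destruct (HI 0 O) as [n [_ Hn]]. specialize (Hba n); lra. }
  simpl in Hl.
  assert (Hil : l <= i).
  { apply Rnot_lt_le; intro Hlt.
    set (e := (l - i) / 2). assert (He : 0 < e) by (unfold e; lra).
    apply is_lim_seq_spec in Hb. destruct (Hb (mkposreal e He)) as [M HM].
    destruct (proj1 (HI (mkposreal e He)) M) as [n [Hn Han]]. simpl in *.
    specialize (HM n Hn). apply Rabs_lt_between in HM. specialize (Hba n). unfold e in *; lra. }
  assert (His : i <= s).
  { pose proof (is_LimSup_LimInf_seq_le a s i HS HI). simpl in H. auto. }
  assert (s = l) by lra. assert (i = l) by lra. subst s i.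
  apply is_LimSup_LimInf_lim_seq; auto.
Qed.

Section KLim.
Variables (E : seqR -> Prop) (N : seqR -> R).
Hypothesis HB : BanachSeqLattice E N.
Hypothesis HU : forall k, E (unitv k).
Hypothesis HS : shifts_bounded E N.

Lemma sup_props (u : nat -> R) (K : R) : (forall j, 0 < u j <= K) ->
  let s := real (Sup_seq (fun j => Finite (u j))) in
  0 < s /\ s <= K /\ (forall j, u j <= s) /\ (forall r, r < s -> exists j, r < u j).
Proof.
  intros Hu s. pose proof (Sup_seq_correct (fun j => Finite (u j))) as H.
  unfold s. destruct (Sup_seq (fun j => Finite (u j))) as [v| |] eqn:Ev.
  - simpl in H |- *.
    assert (Hle : forall j, u j <= v).
    { intro j. apply Rnot_lt_le; intro Hlt. destruct (H (mkposreal (u j - v) ltac:(lra))) as [H1 _].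
      specialize (H1 j). simpl in H1. lra. }
    assert (Hap : forall r, r < v -> exists j, r < u j).
    { intros r Hr. destruct (H (mkposreal (v - r) ltac:(lra))) as [_ [j Hj]]. exists j. simpl in Hj. lra. }
    split; [|split; [|split]]; auto.
    + specialize (Hle O). specialize (Hu O). lra.
    + apply Rnot_lt_le; intro Hlt. destruct (Hap K Hlt) as [j Hj]. specialize (Hu j); lra.
  - simpl in H. destruct (H K) as [j Hj]. simpl in Hj. specialize (Hu j); lra.
  - simpl in H. specialize (H (u O) O). simpl in H. lra.
Qed.

Lemma ratio_plus_bounds n j : 0 < N (unitv (j + n)) / N (unitv j) <= Aop E N n.
Proof.
  pose proof (unitv_pos _ _ HB HU (j + n)). pose proof (unitv_pos _ _ HB HU j).
  split. apply Rdiv_lt_0_compat; auto.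
  pose proof (A_unit E N HB HU HS n j). apply Rmult_le_reg_r with (N (unitv j)); auto.
  field_simplify; lra.
Qed.

Lemma ratio_minus_bounds n j : 0 < N (unitv j) / N (unitv (n + j)) <= Bop E N n.
Proof.
  pose proof (unitv_pos _ _ HB HU (n + j)). pose proof (unitv_pos _ _ HB HU j).
  split. apply Rdiv_lt_0_compat; auto.
  pose proof (B_unit E N HB HU HS n j). rewrite Nat.add_comm in H1.
  apply Rmult_le_reg_r with (N (unitv (n + j))); auto.
  field_simplify; lra.
Qed.

Lemma supplus_props n : 0 < supplus N n /\ supplus N n <= Aop E N n /\
  (forall j, N (unitv (j + n)) / N (unitv j) <= supplus N n) /\
  (forall r, r < supplus N n -> exists j, r < N (unitv (j + n)) / N (unitv j)).
Proof. apply (sup_props (fun j => N (unitv (j + n)) / N (unitv j))). apply ratio_plus_bounds. Qed.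

Lemma supminus_props n : 0 < supminus N n /\ supminus N n <= Bop E N n /\
  (forall j, N (unitv j) / N (unitv (n + j)) <= supminus N n) /\
  (forall r, r < supminus N n -> exists j, r < N (unitv j) / N (unitv (n + j))).
Proof. apply (sup_props (fun j => N (unitv j) / N (unitv (n + j)))). apply ratio_minus_bounds. Qed.

Lemma kplus_lim : is_lim_seq (fun n => Rpower (supplus N (S n)) (/ INR (S n))) (kplus E N) ->
  is_lim_seq (fun n => Rpower (Aop E N (S n)) (/ INR (S n))) (kplus E N).
Proof.
  intros H. apply lim_from_below with (b := fun n => Rpower (supplus N (S n)) (/ INR (S n))) (K := Aop E N 1); auto.
  - intro n. split. apply Rpower_pos. apply Rle_Rpower_l.
    apply Rlt_le, Rinv_0_lt_compat, lt_0_INR; lia.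
    destruct (supplus_props (S n)) as [H1 [H2 _]]; split; auto.
  - intro n. rewrite <- (Rpower_pow_root (Aop E N 1) (S n)) by (try apply A_pos; auto; lia).
    apply Rle_Rpower_l. apply Rlt_le, Rinv_0_lt_compat, lt_0_INR; lia.
    split. apply A_pos; auto. apply A_le_pow; auto.
Qed.

Lemma kminus_lim : is_lim_seq (fun n => Rpower (supminus N (S n)) (/ INR (S n))) (kminus E N) ->
  is_lim_seq (fun n => Rpower (Bop E N (S n)) (/ INR (S n))) (kminus E N).
Proof.
  intros H. apply lim_from_below with (b := fun n => Rpower (supminus N (S n)) (/ INR (S n))) (K := Bop E N 1); auto.
  - intro n. split. apply Rpower_pos. apply Rle_Rpower_l.
    apply Rlt_le, Rinv_0_lt_compat, lt_0_INR; lia.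
    destruct (supminus_props (S n)) as [H1 [H2 _]]; split; auto.
  - intro n. rewrite <- (Rpower_pow_root (Bop E N 1) (S n)) by (try apply B_pos; auto; lia).
    apply Rle_Rpower_l. apply Rlt_le, Rinv_0_lt_compat, lt_0_INR; lia.
    split. apply B_pos; auto. apply B_le_pow; auto.
Qed.

Lemma ev_upper (a : nat -> R) (l r : R) : (forall n, 0 < a n) -> 0 < r -> l < r ->
  is_lim_seq (fun n => Rpower (a (S n)) (/ INR (S n))) l ->
  exists M, forall n, (M <= n)%nat -> a n < r ^ n.
Proof.
  intros Ha Hr Hlr H. apply is_lim_seq_spec in H. destruct (H (mkposreal (r - l) ltac:(lra))) as [M HM].
  exists (S M). intros n Hn. destruct n; [lia|].
  specialize (HM n ltac:(lia)). cbn [pos] in HM. apply Rabs_lt_between in HM.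
  apply root_lt_pow; [apply Ha|auto|lia|lra].
Qed.

Lemma ev_lower (a : nat -> R) (l r : R) : (forall n, 0 < a n) -> 0 < r -> r < l ->
  is_lim_seq (fun n => Rpower (a (S n)) (/ INR (S n))) l ->
  exists M, forall n, (M <= n)%nat -> r ^ n < a n.
Proof.
  intros Ha Hr Hlr H. apply is_lim_seq_spec in H. destruct (H (mkposreal (l - r) ltac:(lra))) as [M HM].
  exists (S M). intros n Hn. destruct n; [lia|].
  specialize (HM n ltac:(lia)). cbn [pos] in HM. apply Rabs_lt_between in HM.
  apply root_gt_pow; [apply Ha|auto|lia|lra].
Qed.

End KLim.

Lemma lim_unique (u : nat -> R) (l1 l2 : R) : is_lim_seq u l1 -> is_lim_seq u l2 -> l1 = l2.
Proof.
  intros H1 H2. apply is_lim_seq_unique in H1. apply is_lim_seq_unique in H2.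
  rewrite H1 in H2. injection H2; auto.
Qed.

Section Region.
Variables (E : seqR -> Prop) (N : seqR -> R).
Hypothesis HB : BanachSeqLattice E N.
Hypothesis HU : forall k, E (unitv k).
Hypothesis HS : shifts_bounded E N.

Let Esub := E_sub E N HB.
Let Esadd := E_sadd E N HB.
Let Esscal := E_sscal E N HB.
Let Nnn := N_nonneg E N HB.
Let Nscal := N_scal E N HB.
Let Ntri := N_tri E N HB.
Let tauE := tau_E E N HS.
Let TE := T_E E N HB HS.

Lemma N_sub_le a b : E a -> E b -> N (ssub a b) <= N a + N b.
Proof.
  intros Ha Hb. replace (ssub a b) with (sadd a (sscal (-1) b)).
  eapply Rle_trans. apply Ntri; auto. rewrite Nscal by auto.
  replace (Rabs (-1)) with 1 by (rewrite Rabs_left; lra). lra.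
  apply functional_extensionality; intro; unfold ssub, sadd, sscal; ring.
Qed.

Lemma complete_geom_ev u (C q : R) (M : nat) : (forall n, E (u n)) -> 0 <= q < 1 ->
  (forall n, (M <= n)%nat -> N (ssub (u (S n)) (u n)) <= C * q ^ n) ->
  exists x, E x /\ nconv N u x.
Proof.
  intros Hu Hq Hs.
  destruct (complete_geom E N HB (fun n => u (n + M)%nat) (C * q ^ M) q) as [x [Hx Hc]]; auto.
  - intro n. simpl. rewrite Rmult_assoc, <- pow_add, Nat.add_comm. apply Hs. lia.
  - exists x; split; auto. intros eps He. destruct (Hc eps He) as [K HK].
    exists (K + M)%nat. intros n Hn. replace n with ((n - M) + M)%nat by lia. apply HK. lia.
Qed.

Lemma T_limit lam u x (y : seqR) : (forall n, E (u n)) -> E x -> nconv N u x ->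
  (forall k, is_lim_seq (fun m => Tlam lam (u m) k) (y k)) -> Tlam lam x = y.
Proof.
  intros Hu Hx Hc Hl. apply functional_extensionality; intro k.
  apply (lim_unique (fun m => Tlam lam (u m) k)); [|apply Hl].
  rewrite Tlam_eq.
  assert (H : is_lim_seq (fun m => match k with O => 0 | S k' => u m k' end - lam * u m k)
                (match k with O => 0 | S k' => x k' end - lam * x k)).
  { apply is_lim_seq_minus'.
    - destruct k. apply is_lim_seq_const. apply (nconv_coord E N HB HU); auto.
    - apply is_lim_seq_scal_l with (a := lam) (lu := x k). apply (nconv_coord E N HB HU); auto. }
  eapply is_lim_seq_ext; [|apply H]. intro m. simpl. rewrite Tlam_eq. reflexivity.
Qed.

Lemma shift_identity_plus lam m x :
  sscal lam (tau (Z.of_nat m) x) = ssub (tau (Z.of_nat (S m)) x) (tau (Z.of_nat m) (Tlam lam x)).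
Proof.
  apply functional_extensionality; intro k. unfold sscal, ssub. rewrite !tau_pos_eq.
  destruct (Nat.leb_spec m k); destruct (Nat.leb_spec (S m) k).
  - rewrite Tlam_eq. replace (k - m)%nat with (S (k - S m)) by lia. ring.
  - assert (k = m) by lia. subst. rewrite Nat.sub_diag, Tlam_eq. ring.
  - lia.
  - ring.
Qed.

Lemma bb_claim_plus lam : 0 < lam -> forall m, exists K, 0 <= K /\ forall x, E x ->
  N x <= / lam ^ m * N (tau (Z.of_nat m) x) + K * N (Tlam lam x).
Proof.
  intros Hl m. induction m.
  - exists 0. split; [lra|]. intros x Hx. simpl. replace (tau 0 x) with x. lra.
    apply functional_extensionality; intro k. change 0%Z with (Z.of_nat 0). rewrite tau_pos_eq.
    simpl. rewrite Nat.sub_0_r; auto.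
  - destruct IHm as [K [HK0 HK]]. exists (K + / lam ^ (S m) * Aop E N m). split.
    { apply Rplus_le_le_0_compat; auto. apply Rmult_le_pos. apply Rlt_le, Rinv_0_lt_compat, pow_lt; auto.
      apply A_spec; auto. }
    intros x Hx. specialize (HK x Hx).
    assert (H1 : lam * N (tau (Z.of_nat m) x) <= N (tau (Z.of_nat (S m)) x) + Aop E N m * N (Tlam lam x)).
    { rewrite <- (Rabs_pos_eq lam) at 1 by lra. rewrite <- Nscal by (apply tauE; auto).
      rewrite shift_identity_plus. eapply Rle_trans. apply N_sub_le; apply tauE; auto.
      apply Rplus_le_compat_l. apply A_bound; auto. }
    assert (H2 : N (tau (Z.of_nat m) x) <= / lam * (N (tau (Z.of_nat (S m)) x) + Aop E N m * N (Tlam lam x))).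
    { apply Rmult_le_reg_l with lam; auto. rewrite <- Rmult_assoc, Rinv_r, Rmult_1_l by lra. auto. }
    eapply Rle_trans; [apply HK|].
    assert (0 < / lam ^ m) by (apply Rinv_0_lt_compat, pow_lt; auto).
    apply Rmult_le_compat_l with (r := / lam ^ m) in H2; [|lra].
    replace (/ lam ^ S m) with (/ lam ^ m * / lam) by (simpl; field; split; [apply pow_nonzero|]; lra).
    nra.
Qed.

Lemma kplus_nonneg : is_lim_seq (fun n => Rpower (Aop E N (S n)) (/ INR (S n))) (kplus E N) -> 0 <= kplus E N.
Proof.
  intros H. apply is_lim_seq_spec in H. apply Rnot_lt_le; intro Hlt.
  destruct (H (mkposreal (- kplus E N) ltac:(lra))) as [M HM]. specialize (HM M (le_n _)).
  cbn [pos] in HM. apply Rabs_lt_between in HM. pose proof (Rpower_pos (Aop E N (S M)) (/ INR (S M))). lra.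
Qed.

Lemma bb_plus lam : 0 < lam ->
  is_lim_seq (fun n => Rpower (Aop E N (S n)) (/ INR (S n))) (kplus E N) -> kplus E N < lam ->
  exists c, 0 < c /\ forall x, E x -> c * N x <= N (Tlam lam x).
Proof.
  intros Hl Hk Hlt. pose proof (kplus_nonneg Hk).
  set (rho := (kplus E N + lam) / 2).
  destruct (ev_upper (Aop E N) (kplus E N) rho) as [M HM]; auto.
  { intro; apply A_pos; auto. } unfold rho; lra. unfold rho; lra.
  destruct (geom_small (rho / lam) (1/2)) as [M' HM'].
  { split. apply Rlt_le, Rdiv_lt_0_compat; unfold rho; lra. apply Rmult_lt_reg_r with lam; auto.
    unfold rho; field_simplify; lra. } lra.
  set (m := (M + M')%nat).
  destruct (bb_claim_plus lam Hl m) as [K [HK0 HK]].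
  exists (/ (2 * K + 1)). split. apply Rinv_0_lt_compat; lra.
  intros x Hx. specialize (HK x Hx).
  assert (/ lam ^ m * N (tau (Z.of_nat m) x) <= 1/2 * N x).
  { assert (HA : N (tau (Z.of_nat m) x) <= Aop E N m * N x) by (apply A_bound; auto).
    specialize (HM m ltac:(unfold m; lia)). specialize (HM' m ltac:(unfold m; lia)).
    unfold Rdiv in HM'. rewrite Rpow_mult_distr, pow_inv in HM'.
    assert (0 < / lam ^ m) by (apply Rinv_0_lt_compat, pow_lt; auto).
    pose proof (Nnn x Hx).
    apply Rle_trans with (/ lam ^ m * (Aop E N m * N x)). apply Rmult_le_compat_l; lra.
    apply Rle_trans with (/ lam ^ m * (rho ^ m * N x)). apply Rmult_le_compat_l. lra.
    apply Rmult_le_compat_r; lra.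
    rewrite <- Rmult_assoc. apply Rmult_le_compat_r. lra. lra. }
  assert (N x <= (2 * K + 1) * N (Tlam lam x)).
  { pose proof (Nnn _ (TE lam x Hx)). nra. }
  apply Rmult_le_reg_l with (2 * K + 1). lra. rewrite <- Rmult_assoc, Rinv_r, Rmult_1_l by lra. auto.
Qed.

Fixpoint usum_plus (lam : R) (y : seqR) (m : nat) : seqR :=
  match m with
  | O => szero
  | S m' => sadd (usum_plus lam y m') (sscal (- / lam ^ (S m')) (tau (Z.of_nat m') y))
  end.

Lemma usum_plus_E lam y m : E y -> E (usum_plus lam y m).
Proof.
  intros Hy; induction m; simpl. apply (bsl_zero _ _ HB). apply Esadd; auto; apply Esscal, tauE; auto.
Qed.

Lemma usum_plus_T lam y m k : 0 < lam ->
  Tlam lam (usum_plus lam y m) k = y k - / lam ^ m * tau (Z.of_nat m) y k.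
Proof.
  intros Hl. induction m.
  - simpl. rewrite Tlam_eq. change 0%Z with (Z.of_nat 0). rewrite tau_pos_eq. simpl.
    rewrite Nat.sub_0_r. unfold szero. destruct k; field.
  - simpl usum_plus. rewrite Tlam_add, Tlam_scal. unfold sadd, sscal. rewrite IHm.
    rewrite Tlam_eq. rewrite !tau_pos_eq.
    assert (lam ^ m <> 0) by (apply pow_nonzero; lra).
    destruct k as [|k].
    + destruct (Nat.leb_spec m 0); destruct (Nat.leb_spec (S m) 0); try lia.
      * assert (m = 0%nat) by lia. subst. simpl. field; repeat split; try apply pow_nonzero; lra.
      * simpl. field; repeat split; try apply pow_nonzero; lra.
    + rewrite tau_pos_eq. destruct (Nat.leb_spec m (S k)); destruct (Nat.leb_spec (S m) (S k)); destruct (Nat.leb_spec m k); try lia.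
      * replace (S k - S m)%nat with (k - m)%nat by lia. simpl. field; repeat split; try apply pow_nonzero; lra.
      * assert (m = S k) by lia. subst. rewrite Nat.sub_diag. simpl. field; repeat split; try apply pow_nonzero; lra.
      * simpl. field; repeat split; try apply pow_nonzero; lra.
Qed.

Lemma surj_plus lam : 0 < lam ->
  is_lim_seq (fun n => Rpower (Aop E N (S n)) (/ INR (S n))) (kplus E N) -> kplus E N < lam ->
  forall y, E y -> exists x, E x /\ y = Tlam lam x.
Proof.
  intros Hl Hk Hlt y Hy. pose proof (kplus_nonneg Hk).
  set (rho := (kplus E N + lam) / 2).
  destruct (ev_upper (Aop E N) (kplus E N) rho) as [M HM]; auto.
  { intro; apply A_pos; auto. } unfold rho; lra. unfold rho; lra.
  destruct (complete_geom_ev (usum_plus lam y) (/ lam * N y) (rho / lam) M) as [x [Hx Hc]].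
  - intro; apply usum_plus_E; auto.
  - split. apply Rlt_le, Rdiv_lt_0_compat; unfold rho; lra. apply Rmult_lt_reg_r with lam; auto.
    unfold rho; field_simplify; lra.
  - intros n Hn.
    replace (ssub (usum_plus lam y (S n)) (usum_plus lam y n))
      with (sscal (- / lam ^ S n) (tau (Z.of_nat n) y))
      by (apply functional_extensionality; intro; unfold ssub; simpl; unfold sadd, sscal; ring).
    rewrite Nscal by (apply tauE; auto). rewrite Rabs_Ropp, Rabs_pos_eq.
    2: apply Rlt_le, Rinv_0_lt_compat, pow_lt; auto.
    assert (HA : N (tau (Z.of_nat n) y) <= Aop E N n * N y) by (apply A_bound; auto).
    specialize (HM n Hn).
    assert (0 < / lam ^ S n) by (apply Rinv_0_lt_compat, pow_lt; auto).
    pose proof (Nnn y Hy).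
    replace (/ lam * N y * (rho / lam) ^ n) with (/ lam ^ S n * (rho ^ n * N y)).
    2: { unfold Rdiv. rewrite Rpow_mult_distr, pow_inv. simpl. field. split; [apply pow_nonzero|]; lra. }
    apply Rmult_le_compat_l. lra.
    apply Rle_trans with (Aop E N n * N y); auto. apply Rmult_le_compat_r; lra.
  - exists x. split; auto. symmetry. apply (T_limit lam (usum_plus lam y)); auto.
    intro; apply usum_plus_E; auto.
    intro k. apply is_lim_seq_ext_loc with (u := fun _ => y k).
    + exists (S k). intros m Hm. rewrite usum_plus_T by auto. rewrite tau_pos_eq.
      destruct (Nat.leb_spec m k); try lia. ring.
    + apply is_lim_seq_const.
Qed.

End Region.

Lemma kminus_facts lam km : 0 < lam -> lam < / km -> 0 < km /\ km < / lam.
Proof.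
  intros Hl H. destruct (Rlt_or_le 0 km) as [Hp|Hn].
  - split; auto. apply Rmult_lt_reg_l with lam; auto. rewrite Rinv_r by lra.
    apply Rmult_lt_compat_r with (r := km) in H; auto. rewrite Rinv_l in H; lra.
  - destruct (Rle_lt_or_eq_dec _ _ Hn) as [Hlt|Heq].
    + pose proof (Rinv_lt_0_compat km Hlt). lra.
    + subst. rewrite Rinv_0 in H. lra.
Qed.

Lemma ex_geom_scal (c q : R) : 0 <= q < 1 -> ex_series (fun k => c * q ^ k).
Proof.
  intros Hq. apply (ex_series_scal_l c (fun k => q ^ k)). apply ex_series_geom. rewrite Rabs_pos_eq; lra.
Qed.

Section Minus.
Variables (E : seqR -> Prop) (N : seqR -> R).
Hypothesis HB : BanachSeqLattice E N.
Hypothesis HU : forall k, E (unitv k).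
Hypothesis HS : shifts_bounded E N.

Let Esub := E_sub E N HB.
Let Esadd := E_sadd E N HB.
Let Esscal := E_sscal E N HB.
Let Nnn := N_nonneg E N HB.
Let Nscal := N_scal E N HB.
Let Ntri := N_tri E N HB.
Let tauE := tau_E E N HS.
Let TE := T_E E N HB HS.

Lemma shift_identity_minus lam m x :
  tau (- Z.of_nat m) x = sadd (tau (- Z.of_nat (S m)) (Tlam lam x)) (sscal lam (tau (- Z.of_nat (S m)) x)).
Proof.
  apply functional_extensionality; intro k. unfold sadd, sscal. rewrite !tau_neg_eq.
  replace (k + S m)%nat with (S (k + m)) by lia. rewrite Tlam_eq. ring.
Qed.

Lemma bb_claim_minus lam : 0 < lam -> forall m, exists K, 0 <= K /\ forall x, E x ->
  N x <= lam ^ m * N (tau (- Z.of_nat m) x) + K * N (Tlam lam x).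
Proof.
  intros Hl m. induction m.
  - exists 0. split; [lra|]. intros x Hx. replace (tau (- Z.of_nat 0) x) with x. simpl; lra.
    apply functional_extensionality; intro k. rewrite tau_neg_eq. rewrite Nat.add_0_r; auto.
  - destruct IHm as [K [HK0 HK]]. exists (K + lam ^ m * Bop E N (S m)). split.
    { apply Rplus_le_le_0_compat; auto. apply Rmult_le_pos. apply pow_le; lra. apply B_spec; auto. }
    intros x Hx. specialize (HK x Hx).
    assert (H1 : N (tau (- Z.of_nat m) x) <= Bop E N (S m) * N (Tlam lam x) + lam * N (tau (- Z.of_nat (S m)) x)).
    { rewrite (shift_identity_minus lam). eapply Rle_trans. apply Ntri. apply tauE; auto.
      apply Esscal, tauE; auto. rewrite Nscal by (apply tauE; auto). rewrite Rabs_pos_eq by lra.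
      apply Rplus_le_compat_r. apply B_bound; auto. }
    assert (0 <= lam ^ m) by (apply pow_le; lra).
    apply Rmult_le_compat_l with (r := lam ^ m) in H1; auto.
    rewrite <- tech_pow_Rmult. rewrite Rmult_plus_distr_l in H1. lra.
Qed.

Lemma bb_minus lam : 0 < lam ->
  is_lim_seq (fun n => Rpower (Bop E N (S n)) (/ INR (S n))) (kminus E N) -> lam < / kminus E N ->
  exists c, 0 < c /\ forall x, E x -> c * N x <= N (Tlam lam x).
Proof.
  intros Hl Hk Hlt. destruct (kminus_facts lam (kminus E N) Hl Hlt) as [Hk0 Hk1].
  set (rho := (kminus E N + / lam) / 2).
  assert (Hr : 0 < rho) by (unfold rho; lra).
  assert (Hlr : lam * rho < 1).
  { unfold rho. apply Rmult_lt_reg_l with (/ lam). apply Rinv_0_lt_compat; auto.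
    rewrite <- Rmult_assoc, Rinv_l, Rmult_1_l, Rmult_1_r by lra. lra. }
  destruct (ev_upper (Bop E N) (kminus E N) rho) as [M HM]; auto.
  { intro; apply B_pos; auto. } unfold rho; lra.
  destruct (geom_small (lam * rho) (1/2)) as [M' HM'].
  { split; auto. apply Rlt_le, Rmult_lt_0_compat; auto. } lra.
  set (m := (M + M')%nat).
  destruct (bb_claim_minus lam Hl m) as [K [HK0 HK]].
  exists (/ (2 * K + 1)). split. apply Rinv_0_lt_compat; lra.
  intros x Hx. specialize (HK x Hx).
  assert (lam ^ m * N (tau (- Z.of_nat m) x) <= 1/2 * N x).
  { assert (HA : N (tau (- Z.of_nat m) x) <= Bop E N m * N x) by (apply B_bound; auto).
    specialize (HM m ltac:(unfold m; lia)). specialize (HM' m ltac:(unfold m; lia)).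
    rewrite Rpow_mult_distr in HM'.
    assert (0 < lam ^ m) by (apply pow_lt; auto).
    pose proof (Nnn x Hx).
    apply Rle_trans with (lam ^ m * (Bop E N m * N x)). apply Rmult_le_compat_l; lra.
    apply Rle_trans with (lam ^ m * (rho ^ m * N x)). apply Rmult_le_compat_l. lra.
    apply Rmult_le_compat_r; lra.
    rewrite <- Rmult_assoc. apply Rmult_le_compat_r. lra. lra. }
  assert (N x <= (2 * K + 1) * N (Tlam lam x)).
  { pose proof (Nnn _ (TE lam x Hx)). nra. }
  apply Rmult_le_reg_l with (2 * K + 1). lra. rewrite <- Rmult_assoc, Rinv_r, Rmult_1_l by lra. auto.
Qed.

Lemma lamterm_bound lam a k : 0 < lam -> E a ->
  Rabs (lamterm lam a k) <= lam * N a / N (unitv 0) * (lam ^ k * Bop E N k).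
Proof.
  intros Hl Ha. unfold lamterm. rewrite Rabs_mult, Rabs_pos_eq by (apply pow_le; lra).
  pose proof (coord_bound E N HB HU a k Ha). pose proof (B_unit E N HB HU HS k 0). simpl in H0.
  pose proof (unitv_pos E N HB HU 0). pose proof (unitv_pos E N HB HU k).
  pose proof (Rabs_pos (a k)). pose proof (B_pos E N HB HU HS k).
  (* |a k| <= N a / s_k <= N a * B_k / s_0 *)
  assert (Rabs (a k) <= N a * Bop E N k / N (unitv 0)).
  { apply Rmult_le_reg_r with (N (unitv 0)); auto. field_simplify; [|lra].
    apply Rle_trans with (Rabs (a k) * (Bop E N k * N (unitv k))).
    apply Rmult_le_compat_l; auto. nra. }
  simpl (lam ^ S k). apply Rle_trans with (lam * lam ^ k * (N a * Bop E N k / N (unitv 0))).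
  apply Rmult_le_compat_l; auto. apply Rmult_le_pos; [lra|apply pow_le; lra].
  right. field. lra.
Qed.

Lemma ex_series_lam lam : 0 < lam ->
  is_lim_seq (fun n => Rpower (Bop E N (S n)) (/ INR (S n))) (kminus E N) -> lam < / kminus E N ->
  forall a, E a -> ex_series (lamterm lam a).
Proof.
  intros Hl Hk Hlt a Ha. destruct (kminus_facts lam (kminus E N) Hl Hlt) as [Hk0 Hk1].
  set (rho := (kminus E N + / lam) / 2).
  assert (Hr : 0 < rho) by (unfold rho; lra).
  assert (Hlr : lam * rho < 1).
  { unfold rho. apply Rmult_lt_reg_l with (/ lam). apply Rinv_0_lt_compat; auto.
    rewrite <- Rmult_assoc, Rinv_l, Rmult_1_l, Rmult_1_r by lra. lra. }
  destruct (ev_upper (Bop E N) (kminus E N) rho) as [M HM]; auto.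
  { intro; apply B_pos; auto. } unfold rho; lra.
  set (C := lam * N a / N (unitv 0)).
  assert (HC : 0 <= C).
  { unfold C. pose proof (unitv_pos E N HB HU 0). pose proof (Nnn a Ha).
    apply Rmult_le_pos. apply Rmult_le_pos; lra. apply Rlt_le, Rinv_0_lt_compat; auto. }
  apply (ex_series_incr_n _ M).
  apply (@ex_series_le R_AbsRing R_CompleteNormedModule) with (b := fun k => C * (lam * rho) ^ (M + k)).
  - intro k. change (norm (lamterm lam a (M + k)%nat)) with (Rabs (lamterm lam a (M + k)%nat)).
    eapply Rle_trans. apply lamterm_bound; auto. fold C. apply Rmult_le_compat_l; auto.
    rewrite Rpow_mult_distr. apply Rmult_le_compat_l. apply pow_le; lra.
    left. apply HM. lia.
  - apply ex_series_ext with (a := fun k => (C * (lam * rho) ^ M) * ((lam * rho) ^ k)).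
    + intro k. rewrite pow_add. rewrite Rmult_assoc. reflexivity.
    + apply ex_geom_scal. split; auto. apply Rlt_le, Rmult_lt_0_compat; auto.
Qed.

Lemma sum_lamterm_T lam x n : sum_n (lamterm lam (Tlam lam x)) n = - lam ^ (S (S n)) * x n.
Proof.
  induction n.
  - rewrite sum_O. unfold lamterm. rewrite Tlam_eq. simpl. ring.
  - rewrite sum_Sn, IHn. change (plus ?a ?b) with (a + b). unfold lamterm. rewrite Tlam_eq. simpl. ring.
Qed.

Lemma range_in_kernel lam : 0 < lam ->
  is_lim_seq (fun n => Rpower (Bop E N (S n)) (/ INR (S n))) (kminus E N) -> lam < / kminus E N ->
  forall x, E x -> Series (lamterm lam (Tlam lam x)) = 0.
Proof.
  intros Hl Hk Hlt x Hx. apply is_series_unique.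
  pose proof (ex_series_lim_0 _ (ex_series_lam lam Hl Hk Hlt x Hx)) as H0.
  change (is_lim_seq (sum_n (lamterm lam (Tlam lam x))) 0).
  apply is_lim_seq_ext with (u := fun n => - lam * lamterm lam x n).
  - intro n. rewrite sum_lamterm_T. unfold lamterm. simpl. ring.
  - replace 0 with (- lam * 0) by ring. apply is_lim_seq_scal_l with (lu := Finite 0). auto.
Qed.

Fixpoint usum_minus (lam : R) (y : seqR) (m : nat) : seqR :=
  match m with
  | O => szero
  | S m' => sadd (usum_minus lam y m') (sscal (lam ^ m') (tau (- Z.of_nat (S m')) y))
  end.

Fixpoint psum (lam : R) (y : seqR) (m : nat) : R :=
  match m with O => 0 | S m' => psum lam y m' + lam ^ m' * y m' end.

Lemma usum_minus_E lam y m : E y -> E (usum_minus lam y m).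
Proof.
  intros Hy; induction m; simpl. apply (bsl_zero _ _ HB). apply Esadd; auto; apply Esscal, tauE; auto.
Qed.

Lemma usum_minus_T lam y m k :
  Tlam lam (usum_minus lam y m) k = y k - lam ^ m * y (k + m)%nat -
    match k with O => psum lam y m | S _ => 0 end.
Proof.
  induction m.
  - simpl. rewrite Tlam_eq. unfold szero. rewrite Nat.add_0_r. destruct k; ring.
  - change (usum_minus lam y (S m)) with (sadd (usum_minus lam y m) (sscal (lam ^ m) (tau (- Z.of_nat (S m)) y))).
    rewrite Tlam_add, Tlam_scal. unfold sadd, sscal. rewrite IHm.
    rewrite Tlam_eq.
    destruct k as [|k].
    + rewrite !tau_neg_eq. simpl. ring.
    + rewrite !tau_neg_eq. replace (k + S m)%nat with (S (k + m)) by lia. replace (S k + S m)%nat with (S (S (k + m))) by lia.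
      replace (S k + m)%nat with (S (k + m)) by lia. simpl. ring.
Qed.

Lemma psum_sum lam y n : lam * psum lam y (S n) = sum_n (lamterm lam y) n.
Proof.
  induction n.
  - rewrite sum_O. unfold lamterm. simpl. ring.
  - rewrite sum_Sn. change (plus ?a ?b) with (a + b). rewrite <- IHn. unfold lamterm. simpl. ring.
Qed.

Lemma kernel_in_range lam : 0 < lam ->
  is_lim_seq (fun n => Rpower (Bop E N (S n)) (/ INR (S n))) (kminus E N) -> lam < / kminus E N ->
  forall y, E y -> Series (lamterm lam y) = 0 -> exists x, E x /\ y = Tlam lam x.
Proof.
  intros Hl Hk Hlt y Hy Hs. destruct (kminus_facts lam (kminus E N) Hl Hlt) as [Hk0 Hk1].
  set (rho := (kminus E N + / lam) / 2).
  assert (Hr : 0 < rho) by (unfold rho; lra).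
  assert (Hlr : lam * rho < 1).
  { unfold rho. apply Rmult_lt_reg_l with (/ lam). apply Rinv_0_lt_compat; auto.
    rewrite <- Rmult_assoc, Rinv_l, Rmult_1_l, Rmult_1_r by lra. lra. }
  destruct (ev_upper (Bop E N) (kminus E N) rho) as [M HM]; auto.
  { intro; apply B_pos; auto. } unfold rho; lra.
  destruct (complete_geom_ev E N HB (usum_minus lam y) (rho * N y) (lam * rho) M) as [x [Hx Hc]].
  - intro; apply usum_minus_E; auto.
  - split; auto. apply Rlt_le, Rmult_lt_0_compat; auto.
  - intros n Hn.
    replace (ssub (usum_minus lam y (S n)) (usum_minus lam y n))
      with (sscal (lam ^ n) (tau (- Z.of_nat (S n)) y))
      by (apply functional_extensionality; intro; unfold ssub; simpl; unfold sadd, sscal; ring).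
    rewrite Nscal by (apply tauE; auto). rewrite Rabs_pos_eq by (apply pow_le; lra).
    assert (HA : N (tau (- Z.of_nat (S n)) y) <= Bop E N (S n) * N y) by (apply B_bound; auto).
    specialize (HM (S n) ltac:(lia)).
    pose proof (Nnn y Hy). assert (0 < lam ^ n) by (apply pow_lt; auto).
    replace (rho * N y * (lam * rho) ^ n) with (lam ^ n * (rho ^ S n * N y))
      by (rewrite Rpow_mult_distr; simpl; ring).
    apply Rmult_le_compat_l. lra.
    apply Rle_trans with (Bop E N (S n) * N y); auto. apply Rmult_le_compat_r; lra.
  - exists x. split; auto. symmetry. apply (T_limit E N HB HU lam (usum_minus lam y)); auto.
    intro; apply usum_minus_E; auto.
    intro k. apply is_lim_seq_ext with (u := fun m => y k - lam ^ m * y (k + m)%nat - match k with O => psum lam y m | S _ => 0 end).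
    { intro m. rewrite usum_minus_T. reflexivity. }
    pose proof (ex_series_lam lam Hl Hk Hlt y Hy) as Hex.
    assert (Ht : is_lim_seq (fun m => lam ^ m * y (k + m)%nat) 0).
    { pose proof (ex_series_lim_0 _ Hex) as H0.
      apply (is_lim_seq_incr_n _ k) in H0.
      apply is_lim_seq_scal_l with (a := / lam ^ (S k)) in H0. simpl in H0. rewrite Rmult_0_r in H0.
      eapply is_lim_seq_ext; [|apply H0]. intro m. unfold lamterm.
      replace (m + k)%nat with (k + m)%nat by lia. rewrite <- tech_pow_Rmult.
      replace (S (k + m)) with (S k + m)%nat by lia. rewrite pow_add. field.
      split; [apply pow_nonzero|]; lra. }
    assert (Hp : is_lim_seq (fun m => match k with O => psum lam y m | S _ => 0 end) 0).
    { destruct k. 2: apply is_lim_seq_const.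
      pose proof (Series_correct _ Hex) as Hsc. rewrite Hs in Hsc.
      change (is_lim_seq (sum_n (lamterm lam y)) 0) in Hsc.
      apply (is_lim_seq_incr_n _ 1). apply is_lim_seq_ext with (u := fun n => / lam * sum_n (lamterm lam y) n).
      intro n. rewrite <- psum_sum. replace (n + 1)%nat with (S n) by lia. field. lra.
      replace 0 with (/ lam * 0) by ring. apply is_lim_seq_scal_l with (lu := Finite 0). auto. }
    replace (y k) with (y k - 0 - 0) at 1 by ring.
    apply is_lim_seq_minus'. apply is_lim_seq_minus'. apply is_lim_seq_const. auto. auto.
Qed.

Lemma series_e0 lam : Series (lamterm lam (unitv 0)) = lam.
Proof.
  apply is_series_unique. change (is_lim_seq (sum_n (lamterm lam (unitv 0))) lam).
  apply is_lim_seq_ext with (u := fun _ => lam). 2: apply is_lim_seq_const.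
  intro n. induction n.
  - rewrite sum_O. unfold lamterm, unitv. simpl. ring.
  - rewrite sum_Sn, <- IHn. change (plus ?a ?b) with (a + b). unfold lamterm, unitv. simpl. ring.
Qed.

End Minus.

Definition trunc (x : seqR) (b : nat) : seqR := fun i => if Nat.ltb i b then x i else 0.
Definition tail (x : seqR) (b : nat) : seqR := fun i => if Nat.ltb i b then 0 else x i.
Definition block (x : seqR) (n m : nat) : seqR :=
  fun i => if andb (Nat.leb n i) (Nat.ltb i m) then x i else 0.

Section OC.
Variables (E : seqR -> Prop) (N : seqR -> R).
Hypothesis HB : BanachSeqLattice E N.
Hypothesis HU : forall k, E (unitv k).
Hypothesis Hsep : separable E N.

Let Esub := E_sub E N HB.
Let Nnn := N_nonneg E N HB.

Lemma solid_E x y : E x -> (forall k, Rabs (y k) <= Rabs (x k)) -> E y.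
Proof. intros. apply (N_solid E N HB x y); auto. Qed.
Lemma solid_N x y : E x -> (forall k, Rabs (y k) <= Rabs (x k)) -> N y <= N x.
Proof. intros. apply (N_solid E N HB x y); auto. Qed.

Lemma trunc_E x b : E x -> E (trunc x b).
Proof. intros. apply (solid_E x); auto. intro k; unfold trunc; destruct (Nat.ltb k b); try lra; rewrite Rabs_R0; apply Rabs_pos. Qed.
Lemma tail_E x b : E x -> E (tail x b).
Proof. intros. apply (solid_E x); auto. intro k; unfold tail; destruct (Nat.ltb k b); try lra; rewrite Rabs_R0; apply Rabs_pos. Qed.
Lemma block_E x n m : E x -> E (block x n m).
Proof. intros. apply (solid_E x); auto. intro k; unfold block; destruct (andb _ _); try lra; rewrite Rabs_R0; apply Rabs_pos. Qed.

(* blocks with large norm contradict separability *)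
Lemma no_bad_blocks x (delta : R) : E x -> 0 < delta ->
  ~ (forall M, exists n m, (M <= n)%nat /\ (n <= m)%nat /\ delta <= N (block x n m)).
Proof.
  intros Hx Hdel Hbad.
  assert (Hf : forall M, {p : nat * nat | (M <= fst p)%nat /\ (fst p <= snd p)%nat /\ delta <= N (block x (fst p) (snd p))}).
  { intro M. apply constructive_indefinite_description. destruct (Hbad M) as [n [m H]]. exists (n, m); auto. }
  set (f := fun M => proj1_sig (Hf M)).
  assert (Hfs : forall M, (M <= fst (f M))%nat /\ (fst (f M) < snd (f M))%nat /\ delta <= N (block x (fst (f M)) (snd (f M)))).
  { intro M. unfold f. destruct (Hf M) as [[n m] [H1 [H2 H3]]]. simpl in *. split; [|split]; auto.
    destruct (Nat.eq_dec n m); [|lia]. subst.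
    replace (block x m m) with szero in H3.
      assert (N szero = 0).
      { replace szero with (sscal 0 x) by (apply functional_extensionality; intro; unfold sscal, szero; ring).
        rewrite (N_scal E N HB) by auto. rewrite Rabs_R0; ring. }
      lra.
    - apply functional_extensionality; intro i. unfold block, szero.
      destruct (Nat.leb_spec m i); destruct (Nat.ltb_spec i m); simpl; auto; lia. }
  clear Hbad.
  set (pp := fix pp (i : nat) : nat * nat := match i with O => f O | S i' => f (snd (pp i')) end).
  assert (Hpp0 : forall i, (fst (pp i) < snd (pp i))%nat /\ delta <= N (block x (fst (pp i)) (snd (pp i)))).
  { intro i. destruct i; simpl; apply Hfs. }
  assert (Hpp1 : forall i, (snd (pp i) <= fst (pp (S i)))%nat).
  { intro i. change (pp (S i)) with (f (snd (pp i))). apply Hfs. }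
  assert (Hmono : forall i j, (i < j)%nat -> (snd (pp i) <= fst (pp j))%nat).
  { intros i j Hij. induction Hij.
    - apply Hpp1.
    - pose proof (Hpp1 m). pose proof (proj1 (Hpp0 m)). lia. }
  assert (Huniq : forall i j k, (fst (pp i) <= k < snd (pp i))%nat -> (fst (pp j) <= k < snd (pp j))%nat -> i = j).
  { intros i j k Hi Hj. destruct (Nat.lt_trichotomy i j) as [Hl|[He|Hl]]; auto.
    - pose proof (Hmono i j Hl). lia.
    - pose proof (Hmono j i Hl). lia. }
  set (v := fun (A : nat -> bool) (k : nat) =>
              if excluded_middle_informative (exists j, (fst (pp j) <= k < snd (pp j))%nat /\ A j = true)
              then x k else 0).
  assert (Hv : forall A, E (v A)).
  { intro A. apply (solid_E x); auto. intro k. unfold v. destruct (excluded_middle_informative _); try lra.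
    rewrite Rabs_R0; apply Rabs_pos. }
  assert (Hsepar : forall A A' j, A j <> A' j -> delta <= N (ssub (v A) (v A'))).
  { intros A A' j Hj. eapply Rle_trans. apply (proj2 (Hpp0 j)).
    apply (solid_N (ssub (v A) (v A'))). apply Esub; auto.
    intro k. unfold block, ssub, v.
    destruct (Nat.leb_spec (fst (pp j)) k); destruct (Nat.ltb_spec k (snd (pp j))); simpl;
      try (rewrite Rabs_R0; apply Rabs_pos).
    destruct (excluded_middle_informative (exists j0, (fst (pp j0) <= k < snd (pp j0))%nat /\ A j0 = true)) as [[j1 [Hj1 HA1]]|HnA];
    destruct (excluded_middle_informative (exists j0, (fst (pp j0) <= k < snd (pp j0))%nat /\ A' j0 = true)) as [[j2 [Hj2 HA2]]|HnA'].
    - assert (j1 = j) by (apply (Huniq j1 j k); auto; lia). assert (j2 = j) by (apply (Huniq j2 j k); auto; lia).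
      subst. congruence.
    - rewrite Rminus_0_r; lra.
    - rewrite Rminus_0_l, Rabs_Ropp; lra.
    - exfalso. destruct (A j) eqn:EA.
      + apply HnA. exists j. split; auto; lia.
      + destruct (A' j) eqn:EA'; [|congruence]. apply HnA'. exists j. split; auto; lia. }
  destruct Hsep as [d [Hdd Hdense]].
  assert (HF : forall n, {A : nat -> bool | (exists A', N (ssub (v A') (d n)) < delta / 2) -> N (ssub (v A) (d n)) < delta / 2}).
  { intro n. apply constructive_indefinite_description.
    destruct (classic (exists A', N (ssub (v A') (d n)) < delta / 2)) as [[A' HA']|Hn].
    - exists A'; auto.
    - exists (fun _ => true). intro H; contradiction. }
  set (F := fun n => proj1_sig (HF n)).
  set (D := fun j => negb (F j j)).
  destruct (Hdense (v D) (Hv D) (delta / 2)) as [n Hn]. lra.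
  assert (HFn : N (ssub (v (F n)) (d n)) < delta / 2).
  { unfold F. destruct (HF n) as [A HA]. simpl. apply HA. exists D; auto. }
  assert (Hne : D n <> F n n) by (unfold D; destruct (F n n); simpl; congruence).
  pose proof (Hsepar D (F n) n Hne).
  pose proof (N_tri_sub E N HB (v D) (d n) (v (F n)) (Hv D) (Hdd n) (Hv (F n))).
  rewrite (N_sym E N HB (d n)) in H0 by auto. lra.
Qed.

Lemma order_cont x : E x -> forall eps, 0 < eps -> forall B, exists b, (B <= b)%nat /\ N (tail x b) < eps.
Proof.
  intros Hx.
  assert (Hcauchy : forall delta, 0 < delta -> exists M, forall n m, (M <= n)%nat -> (n <= m)%nat -> N (block x n m) < delta).
  { intros delta Hd. apply NNPP. intro Hn. apply (no_bad_blocks x delta Hx Hd).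
    intro M. apply NNPP; intro Hn'. apply Hn. exists M. intros n m Hn1 Hn2.
    apply Rnot_le_lt. intro Hle. apply Hn'. exists n, m; auto. }
  assert (Htr : forall n m, (n <= m)%nat -> ssub (trunc x m) (trunc x n) = block x n m).
  { intros n m Hnm. apply functional_extensionality; intro i. unfold ssub, trunc, block.
    destruct (Nat.ltb_spec i m); destruct (Nat.ltb_spec i n); destruct (Nat.leb_spec n i); simpl; try ring; lia. }
  destruct (complete E N HB (trunc x)) as [z [Hz Hc]].
  - intro; apply trunc_E; auto.
  - intros eps He. destruct (Hcauchy eps He) as [M HM]. exists M. intros m n Hm Hn.
    destruct (Nat.le_ge_cases n m).
    + rewrite Htr by auto. apply HM; auto.
    + rewrite (N_sym E N HB) by (apply trunc_E; auto). rewrite Htr by auto. apply HM; auto.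
  - assert (z = x).
    { apply functional_extensionality; intro k.
      pose proof (nconv_coord E N HB HU (trunc x) z k ltac:(intro; apply trunc_E; auto) Hz Hc) as H.
      apply (is_lim_seq_ext_loc _ (fun _ => x k)) in H.
      + apply is_lim_seq_unique in H. rewrite Lim_seq_const in H. injection H; auto.
      + exists (S k). intros n Hn. unfold trunc. destruct (Nat.ltb_spec k n); auto; lia. }
    subst z. intros eps He B. destruct (Hc eps He) as [M HM]. exists (max B M). split; [lia|].
    replace (tail x (max B M)) with (sscal (-1) (ssub (trunc x (max B M)) x)).
    + rewrite (N_scal E N HB) by (apply Esub; auto; apply trunc_E; auto).
      replace (Rabs (-1)) with 1 by (rewrite Rabs_left; lra). rewrite Rmult_1_l. apply HM. lia.
    + apply functional_extensionality; intro i. unfold sscal, ssub, trunc, tail.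
      destruct (Nat.ltb i (max B M)); ring.
Qed.

End OC.

Definition bbelow (E : seqR -> Prop) (N : seqR -> R) (lam : R) : Prop :=
  exists c, 0 < c /\ forall x, E x -> c * N x <= N (Tlam lam x).

Definition approx_supp (E : seqR -> Prop) (N : seqR -> R) (lam : R) : Prop :=
  forall eps, 0 < eps -> forall P, exists x Q, E x /\ N x = 1 /\ N (Tlam lam x) <= eps /\ (P < Q)%nat /\
    (forall k, (k < P)%nat \/ (Q <= k)%nat -> x k = 0).

Lemma pow2_big r : exists m, r < 2 ^ m.
Proof.
  destruct (archimed r) as [H _].
  assert (Hz : (0 <= Z.max 0 (up r))%Z) by lia.
  exists (Z.to_nat (Z.max 0 (up r))).
  assert (forall m, INR m + 1 <= 2 ^ m).
  { induction m. simpl; lra. rewrite S_INR. simpl. pose proof (pos_INR m). lra. }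
  specialize (H0 (Z.to_nat (Z.max 0 (up r)))). rewrite INR_IZR_INZ, Z2Nat.id in H0 by lia.
  assert (IZR (up r) <= IZR (Z.max 0 (up r))) by (apply IZR_le; lia). lra.
Qed.

Section NB.
Variables (E : seqR -> Prop) (N : seqR -> R).
Hypothesis HB : BanachSeqLattice E N.
Hypothesis HU : forall k, E (unitv k).
Hypothesis HS : shifts_bounded E N.

Let Esub := E_sub E N HB.
Let Esadd := E_sadd E N HB.
Let Esscal := E_sscal E N HB.
Let Nnn := N_nonneg E N HB.
Let Nscal := N_scal E N HB.
Let Ntri := N_tri E N HB.
Let tauE := tau_E E N HS.
Let TE := T_E E N HB HS.

Lemma T_zero_below lam u P : 0 < lam -> (forall k, (k < P)%nat -> Tlam lam u k = 0) ->
  forall k, (k < P)%nat -> u k = 0.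
Proof.
  intros Hl H k. induction k; intros Hk.
  - specialize (H O Hk). rewrite Tlam_eq in H. nra.
  - specialize (H (S k) Hk). rewrite Tlam_eq in H. rewrite IHk in H by lia. nra.
Qed.

Fixpoint zsum (X : nat -> seqR) (m : nat) : seqR :=
  match m with O => szero | S m' => sadd (zsum X m') (sscal (2 ^ m') (X m')) end.

Lemma not_closed lam : 0 < lam -> approx_supp E N lam -> ~ closed_range E N (Tlam lam).
Proof.
  intros Hl Hap Hcl.
  assert (Hstep : forall n P, {p : seqR * nat | E (fst p) /\ N (fst p) = 1 /\ N (Tlam lam (fst p)) <= (/ 4) ^ n /\
      (P < snd p)%nat /\ forall k, (k < P)%nat \/ (snd p <= k)%nat -> fst p k = 0}).
  { intros n P. apply constructive_indefinite_description.
    destruct (Hap ((/4) ^ n) ltac:(apply pow_lt; lra) P) as [x [Q H]]. exists (x, Q); auto. }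
  set (Pseq := fix Pseq (n : nat) : nat := match n with O => O | S n' => snd (proj1_sig (Hstep n' (Pseq n'))) end).
  set (X := fun n => fst (proj1_sig (Hstep n (Pseq n)))).
  assert (HX : forall n, E (X n) /\ N (X n) = 1 /\ N (Tlam lam (X n)) <= (/ 4) ^ n /\
      (Pseq n < Pseq (S n))%nat /\ forall k, (k < Pseq n)%nat \/ (Pseq (S n) <= k)%nat -> X n k = 0).
  { intro n. unfold X. change (Pseq (S n)) with (snd (proj1_sig (Hstep n (Pseq n)))).
    destruct (Hstep n (Pseq n)) as [p Hp]. simpl. auto. }
  assert (HPmono : forall n m, (n <= m)%nat -> (Pseq n <= Pseq m)%nat).
  { intros n m H. induction H; auto. pose proof (proj1 (proj2 (proj2 (proj2 (HX m))))). lia. }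
  assert (HPge : forall n, (n <= Pseq n)%nat).
  { induction n; simpl; [lia|]. pose proof (proj1 (proj2 (proj2 (proj2 (HX n))))). simpl in H. lia. }
  assert (Hz : forall m, E (zsum X m)).
  { induction m; simpl. apply (bsl_zero _ _ HB). apply Esadd; auto. apply Esscal. apply HX. }
  set (w := fun m => Tlam lam (zsum X m)).
  destruct (complete_geom E N HB w 1 (/ 2)) as [y [Hy Hc]].
  - intro; apply TE; auto.
  - lra.
  - intro n. unfold w. simpl zsum. rewrite Tlam_add, Tlam_scal.
    replace (ssub (sadd (Tlam lam (zsum X n)) (sscal (2 ^ n) (Tlam lam (X n)))) (Tlam lam (zsum X n)))
      with (sscal (2 ^ n) (Tlam lam (X n)))
      by (apply functional_extensionality; intro; unfold ssub, sadd, sscal; ring).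
    rewrite Nscal by (apply TE, HX). rewrite Rabs_pos_eq by (apply pow_le; lra).
    pose proof (proj1 (proj2 (proj2 (HX n)))).
    replace (1 * (/ 2) ^ n) with (2 ^ n * (/ 4) ^ n).
    + apply Rmult_le_compat_l; auto. apply pow_le; lra.
    + rewrite <- Rpow_mult_distr. replace (2 * / 4) with (/ 2) by field. ring.
  - destruct (Hcl y Hy) as [x [Hx Hxy]].
    { intros eps He. destruct (Hc eps He) as [M HM]. exists (zsum X M). split; auto.
      rewrite (N_sym E N HB) by (auto; apply TE; auto). apply HM; auto. }
    assert (HTX : forall n k, (k < Pseq n)%nat -> Tlam lam (X n) k = 0).
    { intros n k Hk. rewrite Tlam_eq. destruct (HX n) as [_ [_ [_ [_ Hs]]]].
      rewrite (Hs k) by lia. destruct k; [ring|]. rewrite (Hs k) by lia. ring. }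
    assert (Hwconst : forall m m' k, (m <= m')%nat -> (k < Pseq m)%nat -> w m' k = w m k).
    { intros m m' k Hm Hk. induction Hm; auto. unfold w in *. simpl zsum.
      rewrite Tlam_add, Tlam_scal. unfold sadd, sscal. rewrite IHHm. rewrite HTX. ring.
      pose proof (HPmono m m0 Hm). lia. }
    assert (Hyw : forall m k, (k < Pseq m)%nat -> y k = w m k).
    { intros m k Hk. pose proof (nconv_coord E N HB HU w y k ltac:(intro; apply TE; auto) Hy Hc) as H.
      apply (is_lim_seq_ext_loc _ (fun _ => w m k)) in H.
      - apply is_lim_seq_unique in H. rewrite Lim_seq_const in H. injection H; intros; congruence.
      - exists m. intros n Hn. apply Hwconst; auto. }
    assert (Hxz : forall m k, (k < Pseq m)%nat -> x k = zsum X m k).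
    { intros m k Hk.
      assert (forall k, (k < Pseq m)%nat -> ssub x (zsum X m) k = 0).
      { apply (T_zero_below lam _ (Pseq m) Hl). intros k0 Hk0. rewrite Tlam_sub. unfold ssub.
        rewrite <- Hxy. fold (w m). rewrite (Hyw m k0 Hk0). ring. }
      specialize (H k Hk). unfold ssub in H. lra. }
    assert (HzX : forall m k, (Pseq m <= k)%nat -> forall j, (j <= m)%nat -> zsum X j k = 0).
    { intros m k Hk j Hj. induction j; simpl; unfold szero; auto.
      unfold sadd, sscal. rewrite IHj by lia. destruct (HX j) as [_ [_ [_ [_ Hs]]]].
      rewrite Hs. ring. right. pose proof (HPmono (S j) m Hj). lia. }
    assert (Hbig : forall m, 2 ^ m <= N x).
    { intro m. destruct (HX m) as [HXE [HXN _]].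
      replace (2 ^ m) with (N (sscal (2 ^ m) (X m))).
      2: { rewrite Nscal by auto. rewrite HXN, Rabs_pos_eq by (apply pow_le; lra). ring. }
      apply (solid_N E N HB x); auto. intro k. unfold sscal.
      destruct (HX m) as [_ [_ [_ [_ Hs]]]].
      destruct (Nat.lt_ge_cases k (Pseq m)) as [Hk1|Hk1].
      - rewrite Hs by auto. rewrite Rmult_0_r, Rabs_R0. apply Rabs_pos.
      - destruct (Nat.lt_ge_cases k (Pseq (S m))) as [Hk2|Hk2].
        + rewrite (Hxz (S m) k Hk2). simpl. unfold sadd, sscal. rewrite (HzX m k Hk1 m) by lia.
          rewrite Rplus_0_l. right; reflexivity.
        + rewrite Hs by auto. rewrite Rmult_0_r, Rabs_R0. apply Rabs_pos. }
    destruct (pow2_big (N x)) as [m Hm]. specialize (Hbig m). lra.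
Qed.

Lemma trunc_T lam x b : Tlam lam (trunc x (S b)) = sadd (trunc (Tlam lam x) (S b)) (sscal (x b) (unitv (S b))).
Proof.
  apply functional_extensionality; intro k. unfold sadd, sscal, trunc, unitv. rewrite !Tlam_eq.
  destruct k as [|k].
  - simpl. ring.
  - destruct (Nat.ltb_spec (S k) (S b)); destruct (Nat.ltb_spec k (S b)); destruct (Nat.eqb_spec (S k) (S b)); try lia.
    + ring.
    + injection e; intro; subst. ring.
    + ring.
Qed.

Lemma approx_from_not_bb lam : separable E N -> ~ bbelow E N lam -> approx_supp E N lam.
Proof.
  intros Hsep Hnb eps He P.
  set (al := Aop E N P). set (be := Bop E N P). set (a1 := Aop E N 1).
  assert (Hal : 0 < al) by (apply A_pos; auto). assert (Hbe : 0 < be) by (apply B_pos; auto).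
  assert (Ha1 : 0 < a1) by (apply A_pos; auto).
  set (e1 := eps / (4 * al * be)).
  assert (He1 : 0 < e1) by (unfold e1; apply Rdiv_lt_0_compat; [lra|]; apply Rmult_lt_0_compat; [lra|]; auto).
  assert (Hx0 : exists x, E x /\ N (Tlam lam x) < e1 * N x).
  { apply NNPP; intro Hn. apply Hnb. exists e1. split; auto. intros x Hx.
    apply Rnot_lt_le; intro Hlt. apply Hn; exists x; auto. }
  destruct Hx0 as [x0 [Hx0 Hr0]].
  assert (Hn0 : 0 < N x0).
  { pose proof (Nnn _ (TE lam x0 Hx0)). destruct (Rle_lt_or_eq_dec 0 (N x0) (Nnn x0 Hx0)); auto.
    rewrite <- e in Hr0. lra. }
  set (x1 := sscal (/ N x0) x0).
  assert (Hx1 : E x1) by (apply Esscal; auto).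
  assert (HN1 : N x1 = 1).
  { unfold x1. rewrite Nscal by auto. rewrite Rabs_pos_eq by (apply Rlt_le, Rinv_0_lt_compat; auto). field. lra. }
  assert (HT1 : N (Tlam lam x1) <= e1).
  { unfold x1. rewrite Tlam_scal, Nscal by (apply TE; auto). rewrite Rabs_pos_eq by (apply Rlt_le, Rinv_0_lt_compat; auto).
    apply Rmult_le_reg_l with (N x0); auto. rewrite <- Rmult_assoc, Rinv_r, Rmult_1_l by lra. lra. }
  set (x2 := tau (Z.of_nat P) x1).
  assert (Hx2 : E x2) by (apply tauE; auto).
  assert (HN2 : 1 <= be * N x2).
  { rewrite <- HN1. unfold x2, be. rewrite <- (tau_neg_pos P x1) at 1. apply (B_bound E N HB HS); auto. }
  assert (HT2 : N (Tlam lam x2) <= al * e1).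
  { unfold x2. rewrite Tlam_tau. eapply Rle_trans. apply (A_bound E N HB HS); auto. apply Rmult_le_compat_l; lra. }
  set (eta := Rmin (/ (2 * be)) (eps / (8 * a1 * be))).
  assert (Heta : 0 < eta).
  { unfold eta. apply Rmin_glb_lt. apply Rinv_0_lt_compat; lra.
    apply Rdiv_lt_0_compat; [lra|]. apply Rmult_lt_0_compat; [lra|]; auto. }
  destruct (order_cont E N HB HU Hsep x2 Hx2 eta Heta P) as [b [HbP Hb]].
  set (x3 := trunc x2 (S b)).
  assert (Hx3 : E x3) by (apply (trunc_E E N HB); auto).
  assert (Htail : N (tail x2 (S b)) <= N (tail x2 b)).
  { apply (solid_N E N HB). apply (tail_E E N HB); auto. intro k. unfold tail.
    destruct (Nat.ltb_spec k (S b)); destruct (Nat.ltb_spec k b); try lia; try lra;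
    rewrite Rabs_R0; apply Rabs_pos. }
  assert (HN3 : / (2 * be) <= N x3).
  { assert (x2 = sadd x3 (tail x2 (S b))).
    { apply functional_extensionality; intro k. unfold sadd, x3, trunc, tail. destruct (Nat.ltb k (S b)); ring. }
    pose proof (Ntri x3 (tail x2 (S b)) Hx3 (tail_E E N HB x2 (S b) Hx2)). rewrite <- H in H0.
    assert (eta <= / (2 * be)) by apply Rmin_l.
    assert (/ be <= N x2).
    { apply Rmult_le_reg_l with be; auto. rewrite Rinv_r by lra. lra. }
    replace (/ (2 * be)) with (/ be - / (2 * be)) by (field; lra). lra. }
  assert (Hcoord : Rabs (x2 b) * N (unitv b) <= eta).
  { eapply Rle_trans; [|left; apply Hb]. replace (x2 b) with (tail x2 b b).
    apply (coord_bound E N HB HU); auto. apply (tail_E E N HB); auto. unfold tail. rewrite Nat.ltb_irrefl. auto. }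
  assert (HT3 : N (Tlam lam x3) <= al * e1 + a1 * eta).
  { unfold x3. rewrite trunc_T. eapply Rle_trans. apply Ntri. apply (trunc_E E N HB), TE; auto. apply Esscal; auto.
    apply Rplus_le_compat.
    - eapply Rle_trans; [|apply HT2]. apply (solid_N E N HB). apply TE; auto.
      intro k; unfold trunc; destruct (Nat.ltb k (S b)); try lra. rewrite Rabs_R0; apply Rabs_pos.
    - rewrite Nscal by auto. pose proof (A_unit E N HB HU HS 1 b). rewrite Nat.add_1_r in H. fold a1 in H.
      pose proof (Rabs_pos (x2 b)).
      apply Rle_trans with (Rabs (x2 b) * (a1 * N (unitv b))). apply Rmult_le_compat_l; auto.
      assert (Rabs (x2 b) * (a1 * N (unitv b)) = a1 * (Rabs (x2 b) * N (unitv b))) by ring. rewrite H1.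
      apply Rmult_le_compat_l; lra. }
  set (x4 := sscal (/ N x3) x3).
  assert (Hn3 : 0 < N x3). { pose proof (Rinv_0_lt_compat (2 * be) ltac:(lra)). lra. }
  exists x4, (S b). split; [|split; [|split; [|split]]].
  - apply Esscal; auto.
  - unfold x4. rewrite Nscal, Rabs_pos_eq by (auto; apply Rlt_le, Rinv_0_lt_compat; auto). field. lra.
  - unfold x4. rewrite Tlam_scal, Nscal by (apply TE; auto). rewrite Rabs_pos_eq by (apply Rlt_le, Rinv_0_lt_compat; auto).
    assert (N (Tlam lam x3) <= eps * N x3).
    { eapply Rle_trans. apply HT3.
      set (t := eps / (8 * be)).
      assert (al * e1 = 2 * t) by (unfold t, e1; field; lra).
      assert (a1 * eta <= t).
      { apply Rle_trans with (a1 * (eps / (8 * a1 * be))). apply Rmult_le_compat_l. lra. apply Rmin_r.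
        right; unfold t; field; lra. }
      assert (eps * / (2 * be) <= eps * N x3) by (apply Rmult_le_compat_l; lra).
      replace (eps * / (2 * be)) with (4 * t) in H1 by (unfold t; field; lra).
      assert (0 < t) by (unfold t; apply Rdiv_lt_0_compat; lra).
      lra. }
    apply Rmult_le_reg_l with (N x3); auto. rewrite <- Rmult_assoc, Rinv_r, Rmult_1_l by lra. lra.
  - lia.
  - intros k Hk. unfold x4, sscal, x3, trunc, x2. destruct Hk as [Hk|Hk].
    + destruct (Nat.ltb k (S b)); [|ring]. rewrite tau_pos_eq. destruct (Nat.leb_spec P k); [lia|ring].
    + destruct (Nat.ltb_spec k (S b)); [lia|ring].
Qed.

End NB.

Lemma argmax_ex (g : nat -> R) j c : (j <= c)%nat ->
  exists k, (j <= k <= c)%nat /\ forall i, (j <= i <= c)%nat -> g i <= g k.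
Proof.
  intros H. replace c with (j + (c - j))%nat by lia. generalize (c - j)%nat as d. clear H c.
  induction d.
  - exists j. split; [lia|]. intros i Hi. replace i with j by lia. lra.
  - destruct IHd as [k [Hk Hmax]].
    destruct (Rle_lt_dec (g (j + S d)%nat) (g k)).
    + exists k. split; [lia|]. intros i Hi. destruct (Nat.eq_dec i (j + S d)); [subst; auto|]. apply Hmax; lia.
    + exists (j + S d)%nat. split; [lia|]. intros i Hi. destruct (Nat.eq_dec i (j + S d)); [subst; lra|].
      specialize (Hmax i ltac:(lia)). lra.
Qed.

Lemma pow_big_ev (q r : R) : 1 < q -> exists n0, forall n, (n0 <= n)%nat -> r < q ^ n.
Proof.
  intros Hq. pose proof (is_lim_seq_geom_p q Hq) as H. apply is_lim_seq_spec in H.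
  destruct (H r) as [n0 Hn0]. exists n0; auto.
Qed.

Section Peak.
Variables (E : seqR -> Prop) (N : seqR -> R).
Hypothesis HB : BanachSeqLattice E N.
Hypothesis HU : forall k, E (unitv k).
Hypothesis HS : shifts_bounded E N.

Let Esub := E_sub E N HB.
Let Esadd := E_sadd E N HB.
Let Esscal := E_sscal E N HB.
Let Nnn := N_nonneg E N HB.
Let Nscal := N_scal E N HB.
Let Ntri := N_tri E N HB.
Let tauE := tau_E E N HS.
Let TE := T_E E N HB HS.
Let spos := unitv_pos E N HB HU.

Definition peakvec (lam : R) (j c : nat) : seqR :=
  fun i => if andb (Nat.leb j i) (Nat.ltb i c) then lam ^ j / lam ^ i else 0.

Lemma peakvec_T lam j c : 0 < lam -> (j < S c)%nat ->
  Tlam lam (peakvec lam j (S c)) = sadd (sscal (lam ^ j / lam ^ c) (unitv (S c))) (sscal (- lam) (unitv j)).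
Proof.
  intros Hl Hjc. apply functional_extensionality; intro i. rewrite Tlam_eq. unfold sadd, sscal, unitv, peakvec.
  assert (Hp : forall n, lam ^ n <> 0) by (intro; apply pow_nonzero; lra).
  assert (Hl0 : lam <> 0) by lra.
  destruct i as [|i].
  - destruct (Nat.leb_spec j 0); destruct (Nat.ltb_spec 0 (S c)); destruct (Nat.eqb_spec 0 j); simpl; try lia.
    all: try (subst; simpl; field; auto; fail). all: try (simpl; ring; fail).
  - destruct (Nat.leb_spec j i); destruct (Nat.ltb_spec i (S c)); destruct (Nat.leb_spec j (S i));
    destruct (Nat.ltb_spec (S i) (S c)); destruct (Nat.eqb_spec (S i) (S c)); destruct (Nat.eqb_spec (S i) j);
    simpl; try lia.
    all: try (subst; simpl; field; auto; fail).
    all: try (injection e; intro; subst; simpl; field; auto; fail).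
    all: try (simpl; ring; fail).
Qed.

Lemma peakvec_E lam j c : E (peakvec lam j c).
Proof.
  apply (E_finsupp E N HB HU c). intros i Hi. unfold peakvec.
  destruct (Nat.ltb_spec i c); [lia|]. rewrite Bool.andb_false_r. auto.
Qed.

Lemma no_bb_interior lam rho sigma : 0 < lam -> lam < rho -> 0 < sigma -> 1 < sigma * lam ->
  (exists n0, forall n, (n0 <= n)%nat -> exists j, rho ^ n < N (unitv (j + n)) / N (unitv j)) ->
  (exists n0, forall n, (n0 <= n)%nat -> exists j, sigma ^ n < N (unitv j) / N (unitv (n + j))) ->
  ~ bbelow E N lam.
Proof.
  intros Hl Hlr Hs Hsl [n0 Hrise] [n1 Hfall] [cc [Hcc Hbb]].
  assert (Hp : forall n, 0 < lam ^ n) by (intro; apply pow_lt; auto).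
  set (g := fun i => N (unitv i) / lam ^ i).
  assert (Hg : forall i, 0 < g i) by (intro; unfold g; apply Rdiv_lt_0_compat; auto).
  assert (Hsg : forall i, N (unitv i) = g i * lam ^ i) by (intro; unfold g; field; apply Rgt_not_eq, Hp).
  set (K := Rmax 1 (Bop E N 1 * lam)).
  assert (HK1 : 1 <= K) by apply Rmax_l.
  assert (Hstep : forall i, g i <= K * g (S i)).
  { intro i. pose proof (B_unit E N HB HU HS 1 i). rewrite Nat.add_1_r in H.
    rewrite !Hsg in H. simpl in H.
    apply Rle_trans with (Bop E N 1 * lam * g (S i)).
    - apply Rmult_le_reg_r with (lam ^ i); auto.
      replace (Bop E N 1 * lam * g (S i) * lam ^ i) with (Bop E N 1 * (g (S i) * (lam * lam ^ i))) by ring. lra.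
    - apply Rmult_le_compat_r. apply Rlt_le, Hg. apply Rmax_r. }
  assert (Hback : forall i d, g i <= K ^ d * g (i + d)%nat).
  { intros i d. induction d. simpl. rewrite Nat.add_0_r; lra.
    replace (i + S d)%nat with (S (i + d)) by lia. simpl.
    specialize (Hstep (i + d)%nat). pose proof (pow_le K d ltac:(lra)).
    apply Rle_trans with (K ^ d * (K * g (S (i + d)))).
    apply Rle_trans with (K ^ d * g (i + d)%nat); auto. apply Rmult_le_compat_l; auto. right; ring. }
  set (Mv := 4 * lam / cc + 1).
  assert (HMv : 1 < Mv) by (unfold Mv; assert (0 < 4 * lam / cc) by (apply Rdiv_lt_0_compat; lra); lra).
  destruct (pow_big_ev (rho / lam) Mv) as [n2 Hn2].
  { apply Rmult_lt_reg_r with lam; auto. unfold Rdiv. rewrite Rmult_assoc, Rinv_l; lra. }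
  set (n := (n0 + n2)%nat).
  destruct (Hrise n ltac:(unfold n; lia)) as [j Hj].
  specialize (Hn2 n ltac:(unfold n; lia)).
  set (P := (j + n)%nat).
  assert (HgP : Mv * g j < g P).
  { unfold P, g. unfold Rdiv in Hn2. rewrite Rpow_mult_distr, pow_inv in Hn2.
    pose proof (spos j). pose proof (spos (j + n)).
    apply Rmult_lt_compat_r with (r := N (unitv j)) in Hj; auto.
    unfold Rdiv in Hj. rewrite Rmult_assoc, Rinv_l, Rmult_1_r in Hj by lra.
    pose proof (Hp j). pose proof (Hp n).
    assert (Hjn : 0 < / (lam ^ j * lam ^ n)) by (apply Rinv_0_lt_compat, Rmult_lt_0_compat; auto).
    rewrite pow_add.
    apply Rlt_trans with (rho ^ n * N (unitv j) / (lam ^ j * lam ^ n)).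
    - replace (rho ^ n * N (unitv j) / (lam ^ j * lam ^ n)) with ((rho ^ n * / lam ^ n) * (N (unitv j) / lam ^ j))
        by (field; split; lra).
      apply Rmult_lt_compat_r; auto. apply Rdiv_lt_0_compat; auto.
    - unfold Rdiv. apply Rmult_lt_compat_r; auto. }
  set (q := / (sigma * lam)).
  assert (Hq : 0 <= q < 1).
  { unfold q. split. apply Rlt_le, Rinv_0_lt_compat; lra.
    rewrite <- Rinv_1. apply Rinv_lt_contravar; lra. }
  assert (HKP : 0 < K ^ P) by (apply pow_lt; lra).
  destruct (geom_small q (/ (K ^ P * Mv)) Hq) as [n3 Hn3].
  { apply Rinv_0_lt_compat. apply Rmult_lt_0_compat; lra. }
  set (m := (n1 + n3 + S P)%nat).
  destruct (Hfall m ltac:(unfold m; lia)) as [j' Hj'].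
  specialize (Hn3 m ltac:(unfold m; lia)).
  set (c := (m + j')%nat).
  assert (Hgc : g c < q ^ m * g j').
  { unfold c, g, q. pose proof (spos j'). pose proof (spos (m + j')).
    assert (Hsig : 0 < sigma ^ m) by (apply pow_lt; lra).
    apply Rmult_lt_compat_r with (r := N (unitv (m + j'))) in Hj'; auto.
    unfold Rdiv in Hj'. rewrite Rmult_assoc, Rinv_l, Rmult_1_r in Hj' by lra.
    pose proof (Hp m). pose proof (Hp j').
    assert (Hden : 0 < / (sigma ^ m * lam ^ m * lam ^ j')) by (apply Rinv_0_lt_compat; repeat apply Rmult_lt_0_compat; auto).
    replace (N (unitv (m + j')) / lam ^ (m + j')) with (sigma ^ m * N (unitv (m + j')) * / (sigma ^ m * lam ^ m * lam ^ j'))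
      by (rewrite pow_add; field; repeat split; lra).
    replace ((/ (sigma * lam)) ^ m * (N (unitv j') / lam ^ j')) with (N (unitv j') * / (sigma ^ m * lam ^ m * lam ^ j'))
      by (rewrite pow_inv, Rpow_mult_distr; field; repeat split; lra).
    apply Rmult_lt_compat_r; auto. }
  assert (HPc : (P < c)%nat) by (unfold c, m; lia).
  destruct (argmax_ex g j c) as [k [Hk Hkmax]]. unfold P in HPc; lia.
  assert (HgkP : g P <= g k) by (apply Hkmax; unfold P in *; lia).
  assert (Hqm : q ^ m * (K ^ P * Mv) < 1).
  { apply Rmult_lt_compat_r with (r := K ^ P * Mv) in Hn3. rewrite Rinv_l in Hn3. auto.
    apply Rgt_not_eq; apply Rmult_lt_0_compat; lra. apply Rmult_lt_0_compat; lra. }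
  assert (Hqm0 : 0 <= q ^ m) by (apply pow_le; lra).
  assert (Hgck : Mv * g c <= g k).
  { destruct (Nat.le_gt_cases j' P).
    - pose proof (Hback j' (P - j')%nat). replace (j' + (P - j'))%nat with P in H0 by lia.
      assert (K ^ (P - j') <= K ^ P) by (apply Rle_pow; lia || lra).
      assert (g j' <= K ^ P * g P).
      { eapply Rle_trans; [apply H0|]. apply Rmult_le_compat_r; auto. apply Rlt_le, Hg. }
      assert (Mv * g c <= Mv * (q ^ m * (K ^ P * g P))).
      { apply Rmult_le_compat_l. lra. left. eapply Rlt_le_trans; [apply Hgc|]. apply Rmult_le_compat_l; auto. }
      eapply Rle_trans; [apply H3|]. eapply Rle_trans; [|apply HgkP].
      pose proof (Hg P). nra.
    - assert (g j' <= g k) by (apply Hkmax; unfold c, P in *; lia).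
      assert (Mv * g c <= Mv * (q ^ m * g j')).
      { apply Rmult_le_compat_l. lra. left; auto. }
      eapply Rle_trans; [apply H1|].
      assert (q ^ m * Mv <= 1).
      { assert (K ^ P * (q ^ m * Mv) <= K ^ P * (q ^ m * Mv) * K ^ P) by (rewrite <- (Rmult_1_r (K ^ P * (q ^ m * Mv))) at 1;
          apply Rmult_le_compat_l; [apply Rmult_le_pos; [lra|apply Rmult_le_pos; lra]|apply pow_R1_Rle; lra]).
        assert (1 <= K ^ P) by (apply pow_R1_Rle; lra). nra. }
      pose proof (Hg j'). nra. }
  assert (Hkc : (k < c)%nat).
  { destruct (Nat.eq_dec k c); [|lia]. subst k. pose proof (Hg c). nra. }
  destruct c as [|c0]; [lia|].
  set (x := peakvec lam j (S c0)).
  assert (Hx : E x) by apply peakvec_E.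
  assert (HTx : N (Tlam lam x) <= lam ^ j / lam ^ c0 * N (unitv (S c0)) + lam * N (unitv j)).
  { unfold x. rewrite peakvec_T by (auto; lia). eapply Rle_trans. apply Ntri; apply Esscal; auto.
    rewrite !Nscal by auto. rewrite Rabs_Ropp, !Rabs_pos_eq. lra. lra.
    apply Rlt_le, Rdiv_lt_0_compat; auto. }
  assert (HNx : lam ^ j / lam ^ k * N (unitv k) <= N x).
  { eapply Rle_trans; [|apply (coord_bound E N HB HU x k Hx)]. right. f_equal.
    unfold x, peakvec. destruct (Nat.leb_spec j k); destruct (Nat.ltb_spec k (S c0)); try lia. simpl.
    rewrite Rabs_pos_eq; auto. apply Rlt_le, Rdiv_lt_0_compat; auto. }
  rewrite (Hsg (S c0)), (Hsg j) in HTx. rewrite (Hsg k) in HNx.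
  replace (lam ^ j / lam ^ k * (g k * lam ^ k)) with (lam ^ j * g k) in HNx by (field; apply Rgt_not_eq, Hp).
  replace (lam ^ j / lam ^ c0 * (g (S c0) * lam ^ S c0) + lam * (g j * lam ^ j))
    with (lam * lam ^ j * (g (S c0) + g j)) in HTx by (simpl; field; apply Rgt_not_eq, Hp).
  specialize (Hbb x Hx).
  assert (Hsum : Mv * (g (S c0) + g j) <= 2 * g k) by lra.
  assert (HljK : 0 < lam * lam ^ j) by (apply Rmult_lt_0_compat; auto).
  assert (Mv * N (Tlam lam x) <= 2 * lam * (lam ^ j * g k)).
  { apply Rle_trans with (Mv * (lam * lam ^ j * (g (S c0) + g j))). apply Rmult_le_compat_l; [lra|lra].
    replace (Mv * (lam * lam ^ j * (g (S c0) + g j))) with ((lam * lam ^ j) * (Mv * (g (S c0) + g j))) by ring.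
    replace (2 * lam * (lam ^ j * g k)) with ((lam * lam ^ j) * (2 * g k)) by ring.
    apply Rmult_le_compat_l; lra. }
  assert (Mv * cc >= 4 * lam) by (unfold Mv; field_simplify; lra).
  assert (0 < lam ^ j * g k) by (apply Rmult_lt_0_compat; auto).
  assert (Mv * (cc * N x) <= 2 * lam * N x).
  { apply Rle_trans with (Mv * N (Tlam lam x)). apply Rmult_le_compat_l; lra.
    eapply Rle_trans; [apply H|]. apply Rmult_le_compat_l; lra. }
  nra.
Qed.

Lemma bb_open lam mu c : (forall x, E x -> c * N x <= N (Tlam lam x)) -> Rabs (mu - lam) < c ->
  bbelow E N mu.
Proof.
  intros Hbb Hd. exists (c - Rabs (mu - lam)). split; [lra|]. intros x Hx.
  specialize (Hbb x Hx).
  replace (Tlam lam x) with (sadd (Tlam mu x) (sscal (mu - lam) x)) in Hbb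
    by (apply functional_extensionality; intro; unfold sadd, sscal, Tlam; ring).
  pose proof (Ntri _ _ (TE mu x Hx) (Esscal (mu - lam) x Hx)).
  rewrite Nscal in H by auto. lra.
Qed.

Lemma surj_transfer mu nu c : 0 < c ->
  (forall y, E y -> exists x, E x /\ y = Tlam mu x) ->
  (forall x, E x -> c * N x <= N (Tlam mu x)) -> Rabs (mu - nu) < c / 2 ->
  forall y, E y -> exists x, E x /\ y = Tlam nu x.
Proof.
  intros Hc Hsurj Hbb Hd y Hy.
  set (inv := fun z => epsilon (inhabits szero) (fun x => E x /\ z = Tlam mu x)).
  assert (Hinv : forall z, E z -> E (inv z) /\ z = Tlam mu (inv z)).
  { intros z Hz. unfold inv. apply epsilon_spec. auto. }
  assert (Hinvl : forall a b, E a -> E b -> c * N (ssub (inv a) (inv b)) <= N (ssub a b)).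
  { intros a b Ha Hb. destruct (Hinv a Ha) as [Ha1 Ha2]. destruct (Hinv b Hb) as [Hb1 Hb2].
    eapply Rle_trans. apply Hbb. apply Esub; auto. rewrite Tlam_sub, <- Ha2, <- Hb2. lra. }
  set (d := mu - nu).
  set (xs := fix xs (n : nat) : seqR := match n with O => szero | S n' => inv (ssub y (sscal d (xs n'))) end).
  assert (Hxs : forall n, E (xs n)).
  { induction n; simpl. apply (bsl_zero _ _ HB). apply Hinv. apply Esub; auto. }
  assert (HxsT : forall n, Tlam mu (xs (S n)) = ssub y (sscal d (xs n))).
  { intro n. symmetry. apply Hinv. apply Esub; auto. }
  set (r := Rabs d / c).
  assert (Hr : 0 <= r < 1).
  { unfold r. split. apply Rmult_le_pos; [apply Rabs_pos|apply Rlt_le, Rinv_0_lt_compat; auto].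
    apply Rmult_lt_reg_r with c; auto. unfold Rdiv. rewrite Rmult_assoc, Rinv_l, Rmult_1_r, Rmult_1_l by lra.
    unfold d. lra. }
  assert (Hdiff : forall n, N (ssub (xs (S (S n))) (xs (S n))) <= r * N (ssub (xs (S n)) (xs n))).
  { intro n. change (xs (S (S n))) with (inv (ssub y (sscal d (xs (S n))))).
    change (xs (S n)) with (inv (ssub y (sscal d (xs n)))) at 1.
    pose proof (Hinvl (ssub y (sscal d (xs (S n)))) (ssub y (sscal d (xs n)))) as H.
    replace (ssub (ssub y (sscal d (xs (S n)))) (ssub y (sscal d (xs n)))) with
      (sscal (- d) (ssub (xs (S n)) (xs n))) in H
      by (apply functional_extensionality; intro; unfold ssub, sscal; ring).
    rewrite Nscal, Rabs_Ropp in H by (apply Esub; auto).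
    assert (c * N (ssub (inv (ssub y (sscal d (xs (S n))))) (inv (ssub y (sscal d (xs n))))) <=
            Rabs d * N (ssub (xs (S n)) (xs n))) by (apply H; apply Esub; auto; apply Esscal; auto).
    unfold r. apply Rmult_le_reg_l with c; auto. unfold Rdiv.
    replace (c * (Rabs d * / c * N (ssub (xs (S n)) (xs n)))) with (Rabs d * N (ssub (xs (S n)) (xs n))) by (field; lra).
    auto. }
  set (C0 := N (ssub (xs 1%nat) (xs O))).
  assert (Hgeo : forall n, N (ssub (xs (S n)) (xs n)) <= C0 * r ^ n).
  { induction n. rewrite pow_O, Rmult_1_r. unfold C0; lra. eapply Rle_trans. apply Hdiff.
    apply Rle_trans with (r * (C0 * r ^ n)). apply Rmult_le_compat_l; [lra|auto]. right; simpl; ring. }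
  destruct (complete_geom E N HB xs C0 r Hxs Hr Hgeo) as [x [Hx Hconv]].
  exists x. split; auto.
  (* T_nu x = T_mu x - d x ; show T_mu x = y - d x *)
  assert (Heq : Tlam mu x = ssub y (sscal d x)).
  { apply (N_small_eq E N HB). apply TE; auto. apply Esub; auto; apply Esscal; auto.
    intros eps He.
    set (L := Aop E N 1 + Rabs mu).
    assert (HL : 0 <= L) by (unfold L; pose proof (A_spec E N HB HS 1); pose proof (Rabs_pos mu); lra).
    destruct (Hconv (eps / (2 * (L + Rabs d + 1)))) as [M HM].
    { apply Rdiv_lt_0_compat; [lra|]. pose proof (Rabs_pos d). lra. }
    assert (H1 : N (ssub (xs (S M)) x) < eps / (2 * (L + Rabs d + 1))) by (apply HM; lia).
    assert (H2 : N (ssub (xs M) x) < eps / (2 * (L + Rabs d + 1))) by (apply HM; lia).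
    replace (ssub (Tlam mu x) (ssub y (sscal d x))) with
      (sadd (Tlam mu (ssub x (xs (S M)))) (sscal d (ssub x (xs M)))).
    2: { apply functional_extensionality; intro k. rewrite Tlam_sub, HxsT. unfold sadd, ssub, sscal. ring. }
    eapply Rle_lt_trans. apply Ntri. apply TE, Esub; auto. apply Esscal, Esub; auto.
    rewrite Nscal by (apply Esub; auto).
    pose proof (T_bound E N HB HS mu (ssub x (xs (S M))) (Esub _ _ Hx (Hxs _))).
    rewrite (N_sym E N HB x (xs (S M))) in H by auto. rewrite (N_sym E N HB x (xs M)) by auto.
    fold L in H.
    pose proof (Rabs_pos d). pose proof (Nnn _ (Esub _ _ (Hxs (S M)) Hx)). pose proof (Nnn _ (Esub _ _ (Hxs M) Hx)).
    set (t := eps / (2 * (L + Rabs d + 1))) in *.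
    assert (0 < t) by (unfold t; apply Rdiv_lt_0_compat; lra).
    assert (L * N (ssub (xs (S M)) x) <= L * t) by (apply Rmult_le_compat_l; lra).
    assert (Rabs d * N (ssub (xs M) x) <= Rabs d * t) by (apply Rmult_le_compat_l; lra).
    assert ((L + Rabs d) * t < eps).
    { unfold t. apply Rmult_lt_reg_r with (2 * (L + Rabs d + 1)). lra.
      field_simplify; [|lra]. nra. }
    nra. }
  apply functional_extensionality; intro k.
  assert (Tlam mu x k = y k - d * x k) by (rewrite Heq; reflexivity).
  unfold Tlam in *. unfold d in H. lra.
Qed.

End Peak.

Section Final.
Variables (E : seqR -> Prop) (N : seqR -> R).
Hypothesis HB : BanachSeqLattice E N.
Hypothesis HU : forall k, E (unitv k).
Hypothesis HS : shifts_bounded E N.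

Let Esub := E_sub E N HB.
Let Esadd := E_sadd E N HB.
Let Esscal := E_sscal E N HB.
Let Nnn := N_nonneg E N HB.
Let Nscal := N_scal E N HB.
Let Ntri := N_tri E N HB.
Let tauE := tau_E E N HS.
Let TE := T_E E N HB HS.

Lemma iso_closed lam : bbelow E N lam -> closed_range E N (Tlam lam).
Proof.
  intros [c [Hc Hbb]] y Hy Happ.
  assert (Hs : forall n : nat, {x | E x /\ N (ssub y (Tlam lam x)) < / INR (S n)}).
  { intro n. apply constructive_indefinite_description. apply Happ.
    apply Rinv_0_lt_compat, lt_0_INR; lia. }
  set (xs := fun n => proj1_sig (Hs n)).
  assert (Hxs : forall n, E (xs n) /\ N (ssub y (Tlam lam (xs n))) < / INR (S n)).
  { intro n. unfold xs. destruct (Hs n); auto. }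
  assert (Hinv : forall M n, (M <= n)%nat -> / INR (S n) <= / INR (S M)).
  { intros M n H. apply Rinv_le_contravar. apply lt_0_INR; lia. apply le_INR; lia. }
  destruct (complete E N HB xs) as [x [Hx Hconv]].
  - intro; apply Hxs.
  - intros eps He. destruct (INR_archimed (c * eps) 2) as [M HM]. nra.
    exists M. intros m n Hm Hn.
    destruct (Hxs m) as [Hm1 Hm2]. destruct (Hxs n) as [Hn1 Hn2].
    assert (c * N (ssub (xs m) (xs n)) <= N (ssub y (Tlam lam (xs m))) + N (ssub y (Tlam lam (xs n)))).
    { eapply Rle_trans. apply Hbb. apply Esub; auto. rewrite Tlam_sub.
      eapply Rle_trans. apply (N_tri_sub E N HB (Tlam lam (xs m)) y (Tlam lam (xs n))); auto; apply TE; auto.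
      rewrite (N_sym E N HB (Tlam lam (xs m)) y) by (auto; apply TE; auto). lra. }
    pose proof (Hinv M m Hm). pose proof (Hinv M n Hn).
    assert (2 * / INR (S M) < c * eps).
    { assert (HSM : 0 < INR (S M)) by (apply lt_0_INR; lia).
      apply Rmult_lt_reg_r with (INR (S M)); auto. rewrite Rmult_assoc, Rinv_l by lra.
      rewrite S_INR. assert (0 < c * eps) by nra. nra. }
    apply Rmult_lt_reg_l with c; auto. lra.
  - exists x. split; auto. apply (N_small_eq E N HB); auto; try (apply TE; auto).
    intros eps He.
    set (L := Aop E N 1 + Rabs lam).
    assert (HL : 0 <= L) by (unfold L; pose proof (A_spec E N HB HS 1); pose proof (Rabs_pos lam); lra).
    destruct (Hconv (eps / (2 * (L + 1)))) as [M1 HM1].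
    { apply Rdiv_lt_0_compat; lra. }
    destruct (INR_archimed (eps / 2) 1) as [M2 HM2]. lra.
    set (n := (M1 + M2 + 1)%nat).
    destruct (Hxs n) as [Hn1 Hn2].
    eapply Rle_lt_trans. apply (N_tri_sub E N HB y (Tlam lam (xs n))); auto; apply TE; auto.
    rewrite <- Tlam_sub.
    pose proof (T_bound E N HB HS lam (ssub (xs n) x) (Esub _ _ Hn1 Hx)). fold L in H.
    specialize (HM1 n ltac:(unfold n; lia)).
    assert (L * N (ssub (xs n) x) <= L * (eps / (2 * (L + 1)))).
    { apply Rmult_le_compat_l; lra. }
    assert (L * (eps / (2 * (L + 1))) < eps / 2).
    { apply Rmult_lt_reg_r with (2 * (L + 1)). lra. field_simplify; lra. }
    assert (/ INR (S n) < eps / 2).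
    { apply Rmult_lt_reg_r with (INR (S n)). apply lt_0_INR; lia. rewrite Rinv_l by (apply not_0_INR; lia).
      assert (INR M2 <= INR (S n)) by (apply le_INR; unfold n; lia). nra. }
    lra.
Qed.

Lemma kprod_ge1 : is_lim_seq (fun n => Rpower (supplus N (S n)) (/ INR (S n))) (kplus E N) ->
  is_lim_seq (fun n => Rpower (supminus N (S n)) (/ INR (S n))) (kminus E N) ->
  1 <= kplus E N * kminus E N.
Proof.
  intros Hp Hm. pose proof (is_lim_seq_mult' _ _ _ _ Hp Hm) as H.
  assert (Hle : forall n, 1 <= Rpower (supplus N (S n)) (/ INR (S n)) * Rpower (supminus N (S n)) (/ INR (S n))).
  { intro n. destruct (supplus_props E N HB HU HS (S n)) as [Hp0 [_ [Hp1 _]]].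
    destruct (supminus_props E N HB HU HS (S n)) as [Hm0 [_ [Hm1 _]]].
    specialize (Hp1 O). specialize (Hm1 O). simpl in Hp1. rewrite Nat.add_0_r in Hm1.
    pose proof (unitv_pos E N HB HU O). pose proof (unitv_pos E N HB HU (S n)).
    rewrite Rpower_mult_distr by auto.
    assert (1 <= supplus N (S n) * supminus N (S n)).
    { apply Rle_trans with (N (unitv (S n)) / N (unitv 0) * (N (unitv 0) / N (unitv (S n)))).
      right; field; lra. apply Rmult_le_compat; auto; apply Rlt_le, Rdiv_lt_0_compat; auto. }
    replace 1 with (Rpower 1 (/ INR (S n))) at 1.
    - apply Rle_Rpower_l. apply Rlt_le, Rinv_0_lt_compat, lt_0_INR; lia. lra.
    - unfold Rpower. rewrite ln_1, Rmult_0_r, exp_0; auto. }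
  pose proof (is_lim_seq_le _ _ _ _ Hle (is_lim_seq_const 1) H). simpl in H0. auto.
Qed.

Lemma interior_not_bb mu : 0 < mu ->
  is_lim_seq (fun n => Rpower (supplus N (S n)) (/ INR (S n))) (kplus E N) ->
  is_lim_seq (fun n => Rpower (supminus N (S n)) (/ INR (S n))) (kminus E N) ->
  0 < kminus E N -> / kminus E N < mu -> mu < kplus E N -> ~ bbelow E N mu.
Proof.
  intros Hmu Hp Hm Hk0 H1 H2.
  set (rho := (mu + kplus E N) / 2).
  set (sigma := (/ mu + kminus E N) / 2).
  assert (Hmk : / mu < kminus E N).
  { apply Rmult_lt_reg_l with mu; auto. rewrite Rinv_r by lra.
    apply Rmult_lt_compat_r with (r := kminus E N) in H1; auto. rewrite Rinv_l in H1; lra. }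
  assert (Hs0 : 0 < sigma) by (unfold sigma; pose proof (Rinv_0_lt_compat mu Hmu); lra).
  apply (no_bb_interior E N HB HU HS mu rho sigma); auto.
  - unfold rho; lra.
  - apply Rmult_lt_reg_l with (/ mu). apply Rinv_0_lt_compat; auto.
    rewrite Rmult_1_r, Rmult_comm, Rmult_assoc, Rinv_r, Rmult_1_r by lra. unfold sigma; lra.
  - destruct (ev_lower (supplus N) (kplus E N) rho) as [M HM]; auto.
    intro n0; apply (proj1 (supplus_props E N HB HU HS n0)). unfold rho; lra. unfold rho; lra.
    exists M. intros n Hn. apply (proj2 (proj2 (proj2 (supplus_props E N HB HU HS n)))). apply HM; auto.
  - destruct (ev_lower (supminus N) (kminus E N) sigma) as [M HM]; auto.
    intro n0; apply (proj1 (supminus_props E N HB HU HS n0)). unfold sigma; lra.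
    exists M. intros n Hn. apply (proj2 (proj2 (proj2 (supminus_props E N HB HU HS n)))). apply HM; auto.
Qed.

End Final.

Lemma bb_shift (E : seqR -> Prop) (N : seqR -> R) (HB : BanachSeqLattice E N) (HS : shifts_bounded E N)
  lam mu c : (forall x, E x -> c * N x <= N (Tlam lam x)) ->
  forall x, E x -> (c - Rabs (mu - lam)) * N x <= N (Tlam mu x).
Proof.
  intros Hbb x Hx. specialize (Hbb x Hx).
  replace (Tlam lam x) with (sadd (Tlam mu x) (sscal (mu - lam) x)) in Hbb
    by (apply functional_extensionality; intro; unfold sadd, sscal, Tlam; ring).
  pose proof (N_tri E N HB _ _ (T_E E N HB HS mu x Hx) (E_sscal E N HB (mu - lam) x Hx)).
  rewrite (N_scal E N HB) in H by auto. lra.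
Qed.

Theorem proposition5p1 (E : seqR -> Prop) (N : seqR -> R) :
  BanachSeqLattice E N ->
  separable E N ->
  (forall k, E (unitv k)) ->
  shifts_bounded E N ->
  is_lim_seq (fun n => Rpower (supplus N (S n)) (/ INR (S n))) (kplus E N) ->
  is_lim_seq (fun n => Rpower (supminus N (S n)) (/ INR (S n))) (kminus E N) ->
  forall lam : R, 0 < lam ->
  ((iso_embedding E N (Tlam lam) <-> closed_range E N (Tlam lam)) /\
   (closed_range E N (Tlam lam) <->
      ((lam < / kminus E N) \/ (kplus E N < lam)))) /\
  (kplus E N < lam -> forall y, E y -> exists x, E x /\ y = Tlam lam x) /\
  (lam < / kminus E N ->
     (forall a, E a -> ex_series (lamterm lam a)) /\
     (forall y, (exists x, E x /\ y = Tlam lam x) <->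
                (E y /\ Series (lamterm lam y) = 0)) /\
     (exists a, E a /\ Series (lamterm lam a) <> 0)).
Proof.
  intros HB Hsep HU HS Hkp Hkm lam Hl.
  pose proof (kplus_lim E N HB HU HS Hkp) as HKp.
  pose proof (kminus_lim E N HB HU HS Hkm) as HKm.
  pose proof (kplus_nonneg E N HKp) as Hkp0.
  pose proof (kprod_ge1 E N HB HU HS Hkp Hkm) as Hprod.
  assert (Hkm0 : 0 < kminus E N).
  { destruct (Rle_lt_dec (kminus E N) 0); auto. nra. }
  assert (Hikm : / kminus E N <= kplus E N).
  { apply Rmult_le_reg_r with (kminus E N); auto. rewrite Rinv_l by lra. lra. }
  assert (Hikm0 : 0 < / kminus E N) by (apply Rinv_0_lt_compat; auto).
  assert (Hreg_bb : (lam < / kminus E N \/ kplus E N < lam) -> bbelow E N lam).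
  { intros [H|H]. apply (bb_minus E N HB HU HS); auto. apply (bb_plus E N HB HU HS); auto. }
  assert (Hnreg : ~ (lam < / kminus E N \/ kplus E N < lam) -> ~ bbelow E N lam).
  { intros Hn Hbb. assert (H1 : / kminus E N <= lam) by (apply Rnot_lt_le; intro; apply Hn; auto).
    assert (H2 : lam <= kplus E N) by (apply Rnot_lt_le; intro; apply Hn; auto).
    destruct Hbb as [c [Hc Hbb]].
    destruct (Rle_lt_or_eq_dec _ _ H1) as [H1'|H1']; destruct (Rle_lt_or_eq_dec _ _ H2) as [H2'|H2'].
    - apply (interior_not_bb E N HB HU HS lam Hl Hkp Hkm Hkm0 H1' H2'). exists c; auto.
    -
      set (eta := Rmin c (kplus E N - / kminus E N) / 2).
      assert (Heta : 0 < eta) by (unfold eta; pose proof (Rmin_glb_lt c (kplus E N - / kminus E N) 0 Hc ltac:(lra)); lra).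
      assert (eta <= c / 2) by (unfold eta; pose proof (Rmin_l c (kplus E N - / kminus E N)); lra).
      assert (eta <= (kplus E N - / kminus E N) / 2) by (unfold eta; pose proof (Rmin_r c (kplus E N - / kminus E N)); lra).
      apply (interior_not_bb E N HB HU HS (lam - eta)); auto; try lra.
      exists (c - Rabs (lam - eta - lam)). split. rewrite Rabs_left; lra.
      apply bb_shift; auto.
    -
      set (eta := Rmin c (kplus E N - / kminus E N) / 2).
      assert (Heta : 0 < eta) by (unfold eta; pose proof (Rmin_glb_lt c (kplus E N - / kminus E N) 0 Hc ltac:(lra)); lra).
      assert (eta <= c / 2) by (unfold eta; pose proof (Rmin_l c (kplus E N - / kminus E N)); lra).
      assert (eta <= (kplus E N - / kminus E N) / 2) by (unfold eta; pose proof (Rmin_r c (kplus E N - / kminus E N)); lra).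
      apply (interior_not_bb E N HB HU HS (lam + eta)); auto; try lra.
      exists (c - Rabs (lam + eta - lam)). split. rewrite Rabs_pos_eq; lra.
      apply bb_shift; auto.
    -
      set (eta := Rmin (c / 4) (lam / 2)).
      assert (Heta : 0 < eta) by (unfold eta; apply Rmin_glb_lt; lra).
      assert (He1 : eta <= c / 4) by apply Rmin_l.
      assert (He2 : eta <= lam / 2) by apply Rmin_r.
      set (mu := lam + eta).
      assert (Hsmu := surj_plus E N HB HU HS mu ltac:(unfold mu; lra) HKp ltac:(unfold mu; lra)).
      assert (Hbbmu := bb_shift E N HB HS lam mu c Hbb).
      replace (Rabs (mu - lam)) with eta in Hbbmu by (unfold mu; rewrite Rabs_pos_eq; lra).
      assert (Hslam := surj_transfer E N HB HS mu lam (c - eta) ltac:(lra) Hsmu Hbbmu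
                         ltac:(unfold mu; rewrite Rabs_pos_eq; lra)).
      set (nu := lam - eta).
      assert (Hsnu := surj_transfer E N HB HS lam nu c Hc Hslam Hbb
                         ltac:(unfold nu; rewrite Rabs_pos_eq; lra)).
      destruct (Hsnu (unitv 0) (HU 0%nat)) as [x [Hx Hxe]].
      pose proof (range_in_kernel E N HB HU HS nu ltac:(unfold nu; lra) HKm ltac:(unfold nu; lra) x Hx).
      rewrite <- Hxe, series_e0 in H. unfold nu in H. lra. }
  split; [split; [split|split]|split].
  - intro Hiso. apply (iso_closed E N HB HS). auto.
  - intro Hcl. apply Hreg_bb. apply NNPP. intro Hn.
    apply (not_closed E N HB HU HS lam Hl); auto.
    apply (approx_from_not_bb E N HB HU HS lam Hsep). apply Hnreg; auto.
  - intro Hcl. apply NNPP. intro Hn.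
    apply (not_closed E N HB HU HS lam Hl); auto.
    apply (approx_from_not_bb E N HB HU HS lam Hsep). apply Hnreg; auto.
  - intro Hr. apply (iso_closed E N HB HS). apply Hreg_bb; auto.
  - intros H y Hy. apply (surj_plus E N HB HU HS lam Hl HKp H y Hy).
  - intro H. split; [|split].
    + apply (ex_series_lam E N HB HU HS lam Hl HKm H).
    + intro y. split.
      * intros [x [Hx Hxy]]. subst y. split. apply (T_E E N HB HS); auto. apply (range_in_kernel E N HB HU HS lam Hl HKm H x Hx).
      * intros [Hy Hs]. apply (kernel_in_range E N HB HU HS lam Hl HKm H y Hy Hs).
    + exists (unitv 0). split; auto. rewrite series_e0. lra.
Qed.
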